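(* Let $A_p\in C[0,\infty)$ be real-valued and consider the Maxwell--Bloch system on $\mathbb X=\mathbb R^2\times S^3$, \[ \dot A=B,\quad \dot B=-\Omega^2A-\sigma B+cj,\quad i\hbar\dot C_1=\hbar\omega_1C_1+iaC_2,\quad i\hbar\dot C_2=\hbar\omega_2C_2-iaC_1, \] with $j=2q\,\mathrm{Im}[\overline{C_1}C_2]$, $a(t)=\frac qc[A(t)+A_p(t)]$. Let $\dot Y(t)=F(Y(t),t)$, $t\ge0$, be the induced reduced dynamics on $\mathbb Y=\mathbb X/U(1)=\mathbb R^2\times S^2$. Then for every $Y_0\in\mathbb Y$ the reduced equation admits a unique global solution $Y(t)=(A(t),B(t),C_*(t))$, $t\ge0$, with $Y(0)=Y_0$.
   Context: Parameters: $\Omega,\sigma,c,\hbar,p>0$, real $\omega_2>\omega_1$, $\omega=\omega_2-\omega_1$, $q=\omega p$. Here $S^3=\{C=(C_1,C_2)\in\mathbb C^2:|C_1|^2+|C_2|^2=1\}$. The group $U(1)$ acts on $\mathbb X$ by $g(\theta)(A,B,C)=(A,B,e^{i\theta}C)$; this action commutes with the Maxwell--Bloch flow. The quotient $\mathbb Y=\mathbb X/U(1)$ is identified with $\mathbb R^2\times S^2$ via the map $\Pi(A,B,C)=(A,B,h(C))$, where $h:S^3\to S^2$ is the Hopf fibration, $C_*=h(C)$. The reduced dynamics $\dot Y=F(Y,t)$ is the time-dependent vector field on $\mathbb Y$ (smooth in $Y$, continuous in $t$) obtained by pushing forward the Maxwell--Bloch vector field under $\Pi$, so that $\Pi$ maps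 Maxwell--Bloch solutions to solutions of the reduced equation. *)

(* Defs.v *)
From Stdlib Require Import Reals ClassicalEpsilon.
From Coquelicot Require Import Coquelicot.
Open Scope R_scope.

(* A complex pair C = (C1, C2) in C^2 is stored in real coordinates
   ((x1, y1), (x2, y2)) with C1 = x1 + i y1, C2 = x2 + i y2. *)
Definition C2R := ((R * R) * (R * R))%type.
(* Phase space X = R^2 x S^3 (ambient R^2 x C^2). *)
Definition Xstate := ((R * R) * C2R)%type.
(* Reduced space Y = R^2 x S^2 (ambient R^2 x R^3). *)
Definition Ystate := ((R * R) * (R * R * R))%type.

Definition onS3 (C : C2R) : Prop :=
  let '((x1, y1), (x2, y2)) := C in x1^2 + y1^2 + x2^2 + y2^2 = 1.

Definition onS2 (v : R * R * R) : Prop :=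
  let '(u1, u2, u3) := v in u1^2 + u2^2 + u3^2 = 1.

(* Hopf fibration h : S^3 -> S^2,
   h(C) = (2 Re(conj C1 C2), 2 Im(conj C1 C2), |C1|^2 - |C2|^2). *)
Definition hopf (C : C2R) : R * R * R :=
  let '((x1, y1), (x2, y2)) := C in
  (2 * (x1 * x2 + y1 * y2), 2 * (x1 * y2 - y1 * x2),
   x1^2 + y1^2 - x2^2 - y2^2).

Definition Pi (X : Xstate) : Ystate := (fst X, hopf (snd X)).

Definition imC1C2 (C : C2R) : R :=
  let '((x1, y1), (x2, y2)) := C in x1 * y2 - y1 * x2.

(* The Maxwell--Bloch vector field V(X,t) on X:
     A' = B,  B' = -Om^2 A - sig B + c j,
     i hb C1' = hb w1 C1 + i a C2,  i hb C2' = hb w2 C2 - i a C1,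
   j = 2 q Im[conj C1 C2],  a(t) = (q/c)(A + Ap t),  q = (w2 - w1) p.
   In real coordinates: C1' = -i w1 C1 + (a/hb) C2, C2' = -i w2 C2 - (a/hb) C1. *)
Definition MBfield (Om sig c hb p w1 w2 : R) (Ap : R -> R)
    (X : Xstate) (t : R) : Xstate :=
  let q := (w2 - w1) * p in
  let '((A, B), C) := X in
  let '((x1, y1), (x2, y2)) := C in
  let j := 2 * q * imC1C2 C in
  let a := q / c * (A + Ap t) in
  ((B, - Om^2 * A - sig * B + c * j),
   ((w1 * y1 + a / hb * x2, - w1 * x1 + a / hb * y2),
    (w2 * y2 - a / hb * x1, - w2 * x2 - a / hb * y1))).

Definition C2shift (C V : C2R) (s : R) : C2R :=
  let '((x1, y1), (x2, y2)) := C in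
  let '((v1, w1), (v2, w2)) := V in
  ((x1 + s * v1, y1 + s * w1), (x2 + s * v2, y2 + s * w2)).

Definition dhopf (C V : C2R) : R * R * R :=
  (Derive (fun s => fst (fst (hopf (C2shift C V s)))) 0,
   Derive (fun s => snd (fst (hopf (C2shift C V s)))) 0,
   Derive (fun s => snd (hopf (C2shift C V s))) 0).

Definition dPi (X W : Xstate) : Ystate := (fst W, dhopf (snd X) (snd W)).

(* Reduced vector field F(Y,t): push-forward of the Maxwell--Bloch field
   under Pi, i.e. the value dPi(X)[V(X,t)] for a point X in R^2 x S^3 with
   Pi X = Y (independent of the choice of X by U(1)-equivariance).
   Off the state space (C_* not on S^2) the value is irrelevant. *)
Definition Fred (Om sig c hb p w1 w2 : R) (Ap : R -> R)
    (Y : Ystate) (t : R) : Ystate :=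
  epsilon (inhabits Y)
    (fun W => exists X : Xstate, onS3 (snd X) /\ Pi X = Y /\
       W = dPi X (MBfield Om sig c hb p w1 w2 Ap X t)).

Definition nonnegR (t : R) : Prop := 0 <= t.

Definition reduced_solution (Om sig c hb p w1 w2 : R) (Ap : R -> R)
    (Y0 : Ystate) (Y : R -> Ystate) : Prop :=
  Y 0 = Y0 /\
  (forall t, 0 <= t -> onS2 (snd (Y t))) /\
  (forall t, 0 <= t ->
     filterdiff Y (within nonnegR (locally t))
       (fun h => scal h (Fred Om sig c hb p w1 w2 Ap (Y t) t))).

(* Main.v *)
Require Import Defs.
From Stdlib Require Import Reals ZArith Lra Lia Psatz ClassicalEpsilon FunctionalExtensionality PropExtensionality.
From Coquelicot Require Import Coquelicot.
Open Scope R_scope.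

Lemma cont_eps (f : R -> R) x : continuous f x ->
  forall eps, 0 < eps -> exists d, 0 < d /\ forall y, Rabs (y - x) < d -> Rabs (f y - f x) < eps.
Proof.
  intros H eps He.
  apply continuity_pt_filterlim in H.
  destruct (H eps He) as [d [Hd Hd']].
  exists d; split; auto. intros y Hy.
  destruct (Req_dec y x) as [->|Hne]. unfold Rminus; rewrite Rplus_opp_r, Rabs_R0; auto.
  apply (Hd' y). split. split; auto. exact I. exact Hy.
Qed.

Lemma eps_cont (f : R -> R) x :
  (forall eps, 0 < eps -> exists d, 0 < d /\ forall y, Rabs (y - x) < d -> Rabs (f y - f x) < eps) ->
  continuous f x.
Proof.
  intros H. apply continuity_pt_filterlim.
  intros eps He. destruct (H eps He) as [d [Hd Hd']].
  exists d; split; auto. intros y [_ Hy]. apply Hd'. exact Hy.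
Qed.

Lemma exp_le' x y : x <= y -> exp x <= exp y.
Proof. intros H. destruct (Req_dec x y) as [->|Hn]. lra. left; apply exp_increasing; lra. Qed.

Definition pr (i : nat) (y : Ystate) : R :=
  match i with
  | O => fst (fst y) | 1%nat => snd (fst y) | 2%nat => fst (fst (snd y))
  | 3%nat => snd (fst (snd y)) | _ => snd (snd y) end.
Definition mk5 (f : nat -> R) : Ystate := ((f 0%nat, f 1%nat), ((f 2%nat, f 3%nat), f 4%nat)).
Lemma pr_mk5 (h : (Ystate -> R) -> R) i : pr i (mk5 (fun j => h (pr j))) = h (pr i).
Proof. destruct i as [|[|[|[|[|i]]]]]; reflexivity. Qed.
Lemma Yext (y z : Ystate) : (forall i, pr i y = pr i z) -> y = z.
Proof.
  destruct y as [[a b][[c d] e]], z as [[a' b'][[c' d'] e']]; intro H.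
  pose proof (H 0%nat); pose proof (H 1%nat); pose proof (H 2%nat);
  pose proof (H 3%nat); pose proof (H 4%nat); simpl in *; subst; reflexivity.
Qed.

Definition nrm (y z : Ystate) := Rabs (pr 0 y - pr 0 z) + Rabs (pr 1 y - pr 1 z)
  + Rabs (pr 2 y - pr 2 z) + Rabs (pr 3 y - pr 3 z) + Rabs (pr 4 y - pr 4 z).
Lemma nrm_le y z d : (forall i, Rabs (pr i y - pr i z) <= d) -> nrm y z <= 5 * d.
Proof. intros H; unfold nrm; pose proof (H 0%nat); pose proof (H 1%nat); pose proof (H 2%nat);
  pose proof (H 3%nat); pose proof (H 4%nat); lra. Qed.
Lemma nrm_ge0 y z : 0 <= nrm y z.
Proof. unfold nrm; pose proof (Rabs_pos (pr 0 y - pr 0 z)); pose proof (Rabs_pos (pr 1 y - pr 1 z));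
  pose proof (Rabs_pos (pr 2 y - pr 2 z)); pose proof (Rabs_pos (pr 3 y - pr 3 z));
  pose proof (Rabs_pos (pr 4 y - pr 4 z)); lra. Qed.

Definition Lip (G : R -> Ystate -> Ystate) L :=
  forall s y z i, Rabs (pr i (G s y) - pr i (G s z)) <= L * nrm y z.
Definition ContT (G : R -> Ystate -> Ystate) := forall y i s, continuous (fun s => pr i (G s y)) s.
Definition Ccont (y : R -> Ystate) := forall i s, continuous (fun s => pr i (y s)) s.

Lemma min6 (x d0 d1 d2 d3 d4 d5 : R) : x < Rmin d0 (Rmin d1 (Rmin d2 (Rmin d3 (Rmin d4 d5)))) ->
  x < d0 /\ x < d1 /\ x < d2 /\ x < d3 /\ x < d4 /\ x < d5.
Proof.
  intros H. repeat match goal with |- _ /\ _ => split end;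
  (eapply Rlt_le_trans; [exact H|]);
  repeat (first [apply Rle_refl | apply Rmin_l | eapply Rle_trans; [apply Rmin_r|]]).
Qed.

Lemma contG G L : 0 <= L -> Lip G L -> ContT G -> forall y, Ccont y -> Ccont (fun s => G s (y s)).
Proof.
  intros HL0 HL HC y Hy i s0. apply eps_cont. intros eps He.
  set (e1 := eps / (2 * (5 * L + 1))).
  assert (He1 : 0 < e1) by (unfold e1; apply Rdiv_lt_0_compat; lra).
  assert (Hee : e1 * (2 * (5 * L + 1)) = eps) by (unfold e1; field; lra).
  destruct (cont_eps _ _ (Hy 0%nat s0) e1 He1) as [d0 [Hd0 H0]].
  destruct (cont_eps _ _ (Hy 1%nat s0) e1 He1) as [d1 [Hd1 H1]].
  destruct (cont_eps _ _ (Hy 2%nat s0) e1 He1) as [d2 [Hd2 H2]].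
  destruct (cont_eps _ _ (Hy 3%nat s0) e1 He1) as [d3 [Hd3 H3]].
  destruct (cont_eps _ _ (Hy 4%nat s0) e1 He1) as [d4 [Hd4 H4]].
  destruct (cont_eps _ _ (HC (y s0) i s0) (eps/2) ltac:(lra)) as [d5 [Hd5 H5]].
  exists (Rmin d0 (Rmin d1 (Rmin d2 (Rmin d3 (Rmin d4 d5))))).
  split. repeat apply Rmin_pos; auto.
  intros s Hs. apply min6 in Hs. destruct Hs as (Hs0 & Hs1 & Hs2 & Hs3 & Hs4 & Hs5).
  specialize (H0 s Hs0). specialize (H1 s Hs1). specialize (H2 s Hs2).
  specialize (H3 s Hs3). specialize (H4 s Hs4). specialize (H5 s Hs5).
  assert (Hn : nrm (y s) (y s0) <= 5 * e1).
  { unfold nrm; lra. }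
  pose proof (HL s (y s) (y s0) i) as HLi.
  replace (pr i (G s (y s)) - pr i (G s0 (y s0))) with
    ((pr i (G s (y s)) - pr i (G s (y s0))) + (pr i (G s (y s0)) - pr i (G s0 (y s0)))) by ring.
  eapply Rle_lt_trans. apply Rabs_triang.
  assert (L * nrm (y s) (y s0) <= L * (5 * e1)) by (apply Rmult_le_compat_l; auto).
  nra.
Qed.

Definition cl (T t : R) := Rmax 0 (Rmin T t).
Lemma cl_lip T s t : Rabs (cl T s - cl T t) <= Rabs (s - t).
Proof. unfold cl, Rmax, Rmin. repeat destruct Rle_dec; unfold Rabs; repeat destruct Rcase_abs; lra. Qed.
Lemma cl_rng T t : 0 <= T -> 0 <= cl T t <= T.
Proof. intros; unfold cl, Rmax, Rmin. repeat destruct Rle_dec; lra. Qed.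
Lemma cl_id T t : 0 <= t <= T -> cl T t = t.
Proof. intros; unfold cl, Rmax, Rmin. repeat destruct Rle_dec; lra. Qed.
Lemma cl_cont T t : continuous (cl T) t.
Proof. apply eps_cont. intros eps He. exists eps. split; auto. intros y Hy.
  eapply Rle_lt_trans. apply cl_lip. auto. Qed.

Lemma exRI (g : R -> R) a b : (forall s, continuous g s) -> ex_RInt g a b.
Proof. intros Hg. apply (ex_RInt_continuous (V:=R_CompleteNormedModule)). intros; apply Hg. Qed.
Lemma prim_deriv (g : R -> R) : (forall s, continuous g s) -> forall x, is_derive (fun t => RInt g 0 t) x (g x).
Proof.
  intros Hg x. apply is_derive_RInt with (a:=0).
  apply filter_forall. intro b. apply (RInt_correct (V:=R_CompleteNormedModule)). apply exRI; auto.
  apply Hg.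
Qed.
Lemma prim_cont (g : R -> R) : (forall s, continuous g s) -> forall x, continuous (fun t => RInt g 0 t) x.
Proof. intros Hg x. apply (ex_derive_continuous (K:=R_AbsRing) (V:=R_NormedModule)). eexists. apply prim_deriv; auto. Qed.

Lemma RInt_le_bound (g h : R -> R) x Ih : 0 <= x -> ex_RInt g 0 x -> is_RInt h 0 x Ih ->
  (forall s, 0 <= s <= x -> Rabs (g s) <= h s) -> Rabs (RInt g 0 x) <= Ih.
Proof. intros. apply (norm_RInt_le g h 0 x); auto. apply (RInt_correct (V:=R_CompleteNormedModule)); auto. Qed.

Lemma RInt_bound_const (g : R -> R) x C : 0 <= x -> ex_RInt g 0 x ->
  (forall s, 0 <= s <= x -> Rabs (g s) <= C) -> Rabs (RInt g 0 x) <= x * C.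
Proof. intros. apply RInt_le_bound with (h := fun _ => C); auto.
  replace (x * C) with (scal (x - 0) C). apply (is_RInt_const (V:=R_NormedModule)).
  unfold scal; simpl; unfold mult; simpl; ring. Qed.

Lemma RInt_minus' (f g : R -> R) a b : (forall s, continuous f s) -> (forall s, continuous g s) ->
  RInt f a b - RInt g a b = RInt (fun s => f s - g s) a b.
Proof. intros. symmetry. apply (RInt_minus f g); apply exRI; auto. Qed.

Lemma is_RInt_exp K C x : 0 < K -> is_RInt (fun s => K * C * exp (2*K*s)) 0 x (C/2 * exp(2*K*x) - C/2).
Proof.
  intros HK.
  replace (C/2 * exp(2*K*x) - C/2) with (minus (C/2*exp(2*K*x)) (C/2*exp(2*K*0))).
  apply (is_RInt_derive (fun s => C/2*exp(2*K*s))).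
  intros; auto_derive; auto. field.
  intros. apply (ex_derive_continuous (K:=R_AbsRing) (V:=R_NormedModule)). auto_derive; auto.
  unfold minus, plus, opp; simpl. rewrite Rmult_0_r, exp_0. ring.
Qed.

Lemma small_pow2 C eps : 0 < eps -> exists N, C / 2 ^ N < eps.
Proof.
  intros He. destruct (pow_lt_1_zero (/2) ltac:(rewrite Rabs_pos_eq; lra) (eps / (Rabs C + 1)))
   as [N HN]. apply Rdiv_lt_0_compat; auto. pose proof (Rabs_pos C); lra.
  exists N. specialize (HN N (Nat.le_refl _)).
  rewrite <- Rinv_pow in HN by lra. rewrite Rabs_pos_eq in HN by (left; apply Rinv_0_lt_compat, pow_lt; lra).
  assert (H2 : 0 < 2 ^ N) by (apply pow_lt; lra).
  pose proof (Rabs_pos C). pose proof (Rle_abs C).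
  unfold Rdiv. apply Rle_lt_trans with (Rabs C * / 2 ^ N).
  apply Rmult_le_compat_r; auto. left; apply Rinv_0_lt_compat; auto.
  apply Rle_lt_trans with ((Rabs C + 1) * / 2 ^ N).
  apply Rmult_le_compat_r; [left; apply Rinv_0_lt_compat; auto | lra].
  apply Rmult_lt_reg_l with (/ (Rabs C + 1)). apply Rinv_0_lt_compat; lra.
  rewrite <- Rmult_assoc, Rinv_l by lra. rewrite Rmult_1_l. 
  unfold Rdiv in HN. lra.
Qed.

Lemma zero_pow2 X B : (forall n, Rabs X <= B / 2 ^ n) -> X = 0.
Proof.
  intros H. destruct (Req_dec X 0); auto. exfalso.
  destruct (small_pow2 B (Rabs X)) as [N HN]. apply Rabs_pos_lt; auto.
  specialize (H N). lra.
Qed.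

Fixpoint it (G : R -> Ystate -> Ystate) (T : R) (y0 : Ystate) (n : nat) : R -> Ystate :=
  match n with
  | O => fun _ => y0
  | S m => fun t => mk5 (fun j => pr j y0 + RInt (fun s => pr j (G s (it G T y0 m s))) 0 (cl T t))
  end.

Lemma it_S G T y0 n i t : pr i (it G T y0 (S n) t) =
  pr i y0 + RInt (fun s => pr i (G s (it G T y0 n s))) 0 (cl T t).
Proof. simpl. apply (pr_mk5 (fun p => p y0 + RInt (fun s => p (G s (it G T y0 n s))) 0 (cl T t))). Qed.

Lemma it_cont G L T y0 : 0 <= L -> Lip G L -> ContT G -> forall n, Ccont (it G T y0 n).
Proof.
  intros HL0 HL HC n. induction n; intros i s.
  - simpl. apply continuous_const.
  - apply continuous_ext with
      (f := fun s => pr i y0 + RInt (fun s => pr i (G s (it G T y0 n s))) 0 (cl T s)).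
    intros; symmetry; apply it_S.
    apply (continuous_plus (fun _ => pr i y0) (fun s => RInt (fun s => pr i (G s (it G T y0 n s))) 0 (cl T s))).
    apply continuous_const.
    apply continuous_comp with (f := cl T) (g := fun t => RInt (fun s => pr i (G s (it G T y0 n s))) 0 t).
    apply cl_cont. apply prim_cont. intros; apply (contG G L HL0 HL HC _ IHn i).
Qed.

Lemma addK (a b : R) : a + b - a = b. Proof. ring. Qed.
Lemma addK2 (a b c : R) : a + b - (a + c) = b - c. Proof. ring. Qed.
Lemma exp_ge1 x : 0 <= x -> 1 <= exp x.
Proof. intros; rewrite <- exp_0; apply exp_le'; auto. Qed.

Lemma it_bound G L T y0 M : 0 <= L -> 0 <= T -> Lip G L -> ContT G -> 0 <= M ->
  (forall s i, 0 <= s <= T -> Rabs (pr i (G s y0)) <= M) ->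
  forall n i t, Rabs (pr i (it G T y0 (S n) t) - pr i (it G T y0 n t))
     <= M * T / 2 ^ n * exp (2 * (5*L+1) * cl T t).
Proof.
  intros HL0 HT HL HC HM0 HM n. induction n; intros i t.
  - rewrite it_S. simpl (it G T y0 0 t).
    replace (pr i y0 + RInt (fun s => pr i (G s (it G T y0 0 s))) 0 (cl T t) - pr i y0)
      with (RInt (fun s => pr i (G s y0)) 0 (cl T t)) by (simpl; symmetry; apply addK).
    pose proof (cl_rng T t HT).
    eapply Rle_trans. apply RInt_bound_const. lra. apply exRI. intros; apply HC.
    intros s Hs. apply HM. lra.
    assert (1 <= exp (2 * (5 * L + 1) * cl T t)) by (apply exp_ge1; apply Rmult_le_pos; lra).
    simpl pow. replace (M * T / 1) with (M * T) by field. assert (0 <= M * T) by (apply Rmult_le_pos; lra). assert (cl T t * M <= T * M) by (apply Rmult_le_compat_r; lra). nra.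
  - rewrite !it_S. set (x := cl T t). pose proof (cl_rng T t HT) as Hx. fold x in Hx.
    set (g1 := fun s => pr i (G s (it G T y0 (S n) s))).
    set (g0 := fun s => pr i (G s (it G T y0 n s))).
    replace (pr i y0 + RInt g1 0 x - (pr i y0 + RInt g0 0 x)) with (RInt g1 0 x - RInt g0 0 x) by (symmetry; apply addK2).
    assert (Hc1 : forall s, continuous g1 s) by (intros; apply (contG G L HL0 HL HC _ (it_cont G L T y0 HL0 HL HC (S n)) i)).
    assert (Hc0 : forall s, continuous g0 s) by (intros; apply (contG G L HL0 HL HC _ (it_cont G L T y0 HL0 HL HC n) i)).
    rewrite RInt_minus' by auto.
    set (C := M * T / 2 ^ n). set (K := 5 * L + 1).
    assert (HC0 : 0 <= C) by (unfold C; apply Rmult_le_pos; [nra| left; apply Rinv_0_lt_compat, pow_lt; lra]).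
    eapply Rle_trans. apply RInt_le_bound with (h := fun s => K * C * exp (2 * K * s))
       (Ih := C / 2 * exp (2 * K * x) - C / 2). lra.
    apply (ex_RInt_minus (V:=R_NormedModule) g1 g0); apply exRI; auto.
    apply is_RInt_exp. unfold K; lra.
    intros s Hs.
    eapply Rle_trans. apply HL.
    assert (Hn : nrm (it G T y0 (S n) s) (it G T y0 n s) <= 5 * (C * exp (2 * K * s))).
    { apply nrm_le. intros j. pose proof (IHn j s) as Hj. rewrite (cl_id T s) in Hj by lra. exact Hj. }
    assert (0 <= C * exp (2 * K * s)) by (apply Rmult_le_pos; auto; left; apply exp_pos).
    assert (L * nrm (it G T y0 (S n) s) (it G T y0 n s) <= L * (5 * (C * exp (2 * K * s))))
      by (apply Rmult_le_compat_l; auto).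
    unfold K in *; nra.
    simpl pow. replace (M * T / (2 * 2 ^ n)) with (C / 2) by (unfold C; field; apply pow_nonzero; lra).
    pose proof (exp_pos (2 * K * x)). fold K. lra.
Qed.

Lemma pow2_pos n : 0 < 2 ^ n. Proof. apply pow_lt; lra. Qed.

Lemma seq_tail (f : nat -> R -> Ystate) C0 : 0 <= C0 ->
  (forall n i t, Rabs (pr i (f (S n) t) - pr i (f n t)) <= C0 / 2 ^ n) ->
  forall n m i t, Rabs (pr i (f (n + m)%nat t) - pr i (f n t)) <= 2 * C0 / 2 ^ n - 2 * C0 / 2 ^ (n + m).
Proof.
  intros HC Hb n m i t. induction m.
  - rewrite Nat.add_0_r. unfold Rminus. rewrite !Rplus_opp_r, Rabs_R0. lra.
  - rewrite Nat.add_succ_r.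
    replace (pr i (f (S (n + m)) t) - pr i (f n t)) with
      ((pr i (f (S (n + m)) t) - pr i (f (n+m)%nat t)) + (pr i (f (n+m)%nat t) - pr i (f n t))) by ring.
    eapply Rle_trans. apply Rabs_triang.
    specialize (Hb (n+m)%nat i t).
    simpl pow. 
    replace (2 * C0 / (2 * 2 ^ (n + m))) with (C0 / 2 ^ (n+m)) by (field; apply pow_nonzero; lra).
    lra.
Qed.

Lemma seq_tail' (f : nat -> R -> Ystate) C0 : 0 <= C0 ->
  (forall n i t, Rabs (pr i (f (S n) t) - pr i (f n t)) <= C0 / 2 ^ n) ->
  forall n m i t, (n <= m)%nat -> Rabs (pr i (f m t) - pr i (f n t)) <= 2 * C0 / 2 ^ n.
Proof.
  intros HC Hb n m i t Hnm. replace m with (n + (m - n))%nat by lia.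
  eapply Rle_trans. apply seq_tail; auto.
  pose proof (Rmult_le_pos (2*C0) (/ 2^(n+(m-n))) ltac:(lra) ltac:(left; apply Rinv_0_lt_compat, pow2_pos)).
  unfold Rdiv; lra. pose proof (Rmult_le_pos (2*C0) (/ 2^(n+(m-n))) ltac:(lra) ltac:(left; apply Rinv_0_lt_compat, pow2_pos)). unfold Rdiv; lra.
Qed.

Lemma seq_cauchy (f : nat -> R -> Ystate) C0 : 0 <= C0 ->
  (forall n i t, Rabs (pr i (f (S n) t) - pr i (f n t)) <= C0 / 2 ^ n) ->
  forall i t, Cauchy_crit (fun k => pr i (f k t)).
Proof.
  intros HC Hb i t eps He.
  destruct (small_pow2 (4 * C0) eps He) as [N HN].
  exists N. intros n m Hn Hm. unfold R_dist.
  pose proof (seq_tail' f C0 HC Hb N n i t Hn).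
  pose proof (seq_tail' f C0 HC Hb N m i t Hm).
  replace (pr i (f n t) - pr i (f m t)) with
    ((pr i (f n t) - pr i (f N t)) - (pr i (f m t) - pr i (f N t))) by ring.
  eapply Rle_lt_trans. apply Rabs_triang. rewrite Rabs_Ropp.
  replace (4 * C0 / 2 ^ N) with (2 * C0 / 2 ^ N + 2 * C0 / 2 ^ N) in HN by (field; apply pow_nonzero; lra).
  lra.
Qed.

Definition lim5 (f : nat -> R -> Ystate) (t : R) : Ystate :=
  mk5 (fun j => real (Lim_seq (fun k => pr j (f k t)))).

Lemma lim5_cv (f : nat -> R -> Ystate) C0 : 0 <= C0 ->
  (forall n i t, Rabs (pr i (f (S n) t) - pr i (f n t)) <= C0 / 2 ^ n) ->
  forall i t, Un_cv (fun k => pr i (f k t)) (pr i (lim5 f t)).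
Proof.
  intros HC Hb i t. unfold lim5.
  rewrite (pr_mk5 (fun p => real (Lim_seq (fun k => p (f k t))))).
  destruct (Rcomplete.R_complete _ (seq_cauchy f C0 HC Hb i t)) as [l Hl].
  apply is_lim_seq_Reals in Hl. rewrite (is_lim_seq_unique _ _ Hl). simpl.
  apply is_lim_seq_Reals; auto.
Qed.

Lemma lim5_unif (f : nat -> R -> Ystate) C0 : 0 <= C0 ->
  (forall n i t, Rabs (pr i (f (S n) t) - pr i (f n t)) <= C0 / 2 ^ n) ->
  forall n i t, Rabs (pr i (lim5 f t) - pr i (f n t)) <= 2 * C0 / 2 ^ n.
Proof.
  intros HC Hb n i t.
  pose proof (lim5_cv f C0 HC Hb i t) as Hcv.
  set (l := pr i (lim5 f t)) in *.
  destruct (Rle_or_lt (Rabs (l - pr i (f n t))) (2 * C0 / 2 ^ n)) as [H|H]; auto.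
  exfalso.
  destruct (Hcv (Rabs (l - pr i (f n t)) - 2 * C0 / 2 ^ n)) as [N HN]. lra.
  specialize (HN (n + N)%nat ltac:(lia)). unfold R_dist in HN.
  pose proof (seq_tail' f C0 HC Hb n (n + N)%nat i t ltac:(lia)).
  replace (l - pr i (f n t)) with (- (pr i (f (n+N)%nat t) - l) + (pr i (f (n + N)%nat t) - pr i (f n t))) in H by ring.
  pose proof (Rabs_triang (- (pr i (f (n+N)%nat t) - l)) (pr i (f (n + N)%nat t) - pr i (f n t))).
  rewrite Rabs_Ropp in H1.
  replace (l - pr i (f n t)) with (- (pr i (f (n+N)%nat t) - l) + (pr i (f (n + N)%nat t) - pr i (f n t))) in HN by ring.
  lra.
Qed.

Lemma lim5_cont (f : nat -> R -> Ystate) C0 : 0 <= C0 ->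
  (forall n i t, Rabs (pr i (f (S n) t) - pr i (f n t)) <= C0 / 2 ^ n) ->
  (forall n, Ccont (f n)) -> Ccont (lim5 f).
Proof.
  intros HC Hb Hc i s0. apply eps_cont. intros eps He.
  destruct (small_pow2 (2 * C0) (eps / 3)) as [n Hn]. lra.
  destruct (cont_eps _ _ (Hc n i s0) (eps / 3)) as [d [Hd Hd']]. lra.
  exists d; split; auto. intros s Hs. specialize (Hd' s Hs).
  pose proof (lim5_unif f C0 HC Hb n i s). pose proof (lim5_unif f C0 HC Hb n i s0).
  replace (pr i (lim5 f s) - pr i (lim5 f s0)) with
    ((pr i (lim5 f s) - pr i (f n s)) + (pr i (f n s) - pr i (f n s0)) - (pr i (lim5 f s0) - pr i (f n s0))) by ring.
  eapply Rle_lt_trans. apply Rabs_triang. rewrite Rabs_Ropp.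
  pose proof (Rabs_triang (pr i (lim5 f s) - pr i (f n s)) (pr i (f n s) - pr i (f n s0))).
  lra.
Qed.

Lemma cont_plus (f g : R -> R) x : continuous f x -> continuous g x -> continuous (fun s => f s + g s) x.
Proof. apply (continuous_plus f g). Qed.
Lemma cont_mult (f g : R -> R) x : continuous f x -> continuous g x -> continuous (fun s => f s * g s) x.
Proof. apply (continuous_mult f g). Qed.
Lemma cont_opp (f : R -> R) x : continuous f x -> continuous (fun s => - f s) x.
Proof. apply (continuous_opp f). Qed.
Lemma cont_minus (f g : R -> R) x : continuous f x -> continuous g x -> continuous (fun s => f s - g s) x.
Proof. intros; apply cont_plus; auto; apply cont_opp; auto. Qed.

Theorem picard G L T y0 : 0 <= L -> 0 <= T -> Lip G L -> ContT G ->
  exists y : R -> Ystate, Ccont y /\ forall i t, 0 <= t <= T ->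
    pr i (y t) = pr i y0 + RInt (fun s => pr i (G s (y s))) 0 t.
Proof.
  intros HL0 HT HL HC.
  set (Ssum := fun s => Rabs (pr 0 (G s y0)) + Rabs (pr 1 (G s y0)) + Rabs (pr 2 (G s y0))
     + Rabs (pr 3 (G s y0)) + Rabs (pr 4 (G s y0))).
  assert (HSc : forall s, continuity_pt Ssum s).
  { intros s. apply continuity_pt_filterlim. change (continuous Ssum s). unfold Ssum.
    repeat apply cont_plus; apply continuous_Rabs_comp; apply HC. }
  destruct (continuity_ab_maj Ssum 0 T HT (fun c _ => HSc c)) as [Mx [HMx _]].
  set (M := Ssum Mx).
  assert (HM : forall s i, 0 <= s <= T -> Rabs (pr i (G s y0)) <= M).
  { intros s i Hs. specialize (HMx s Hs). unfold M, Ssum in *.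
    pose proof (Rabs_pos (pr 0 (G s y0))). pose proof (Rabs_pos (pr 1 (G s y0))).
    pose proof (Rabs_pos (pr 2 (G s y0))). pose proof (Rabs_pos (pr 3 (G s y0))).
    pose proof (Rabs_pos (pr 4 (G s y0))).
    destruct i as [|[|[|[|[|i]]]]]; simpl pr in *; lra. }
  assert (HM0 : 0 <= M) by (pose proof (HM 0 0%nat ltac:(lra)); pose proof (Rabs_pos (pr 0 (G 0 y0))); lra).
  set (K := 5 * L + 1).
  set (C0 := M * T * exp (2 * K * T)).
  assert (HC0 : 0 <= C0) by (unfold C0; apply Rmult_le_pos; [apply Rmult_le_pos; lra| left; apply exp_pos]).
  set (f := it G T y0).
  assert (Hb : forall n i t, Rabs (pr i (f (S n) t) - pr i (f n t)) <= C0 / 2 ^ n).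
  { intros n i t. eapply Rle_trans. apply (it_bound G L T y0 M); auto.
    pose proof (cl_rng T t HT).
    assert (exp (2 * (5 * L + 1) * cl T t) <= exp (2 * K * T)) by (apply exp_le'; unfold K; nra).
    assert (0 <= M * T / 2 ^ n) by (apply Rmult_le_pos; [apply Rmult_le_pos; lra| left; apply Rinv_0_lt_compat, pow2_pos]).
    replace (C0 / 2 ^ n) with (M * T / 2 ^ n * exp (2 * K * T)) by (unfold C0; field; apply pow_nonzero; lra).
    apply Rmult_le_compat_l; auto. }
  assert (Hfc : forall n, Ccont (f n)) by (intros; apply (it_cont G L); auto).
  exists (lim5 f). split. apply (lim5_cont f C0); auto.
  intros i t Ht.
  set (ginf := fun s => pr i (G s (lim5 f s))).
  assert (Hgc : forall s, continuous ginf s) by (intros; apply (contG G L HL0 HL HC _ (lim5_cont f C0 HC0 Hb Hfc) i)).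
  cut (pr i (lim5 f t) - pr i y0 - RInt ginf 0 t = 0). unfold ginf; intros; lra.
  apply (zero_pow2 _ (2 * C0 + 10 * T * L * C0)). intros n.
  set (gn := fun s => pr i (G s (f n s))).
  assert (Hgn : forall s, continuous gn s) by (intros; apply (contG G L HL0 HL HC _ (Hfc n) i)).
  assert (Hfs : pr i (f (S n) t) = pr i y0 + RInt gn 0 t).
  { unfold f. rewrite it_S. rewrite cl_id by auto. reflexivity. }
  replace (pr i (lim5 f t) - pr i y0 - RInt ginf 0 t) with
    ((pr i (lim5 f t) - pr i (f (S n) t)) + (RInt gn 0 t - RInt ginf 0 t)) by (rewrite Hfs; ring).
  eapply Rle_trans. apply Rabs_triang.
  pose proof (lim5_unif f C0 HC0 Hb (S n) i t) as H1.
  simpl pow in H1.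
  rewrite RInt_minus' by auto.
  assert (H2 : Rabs (RInt (fun s => gn s - ginf s) 0 t) <= t * (L * (5 * (2 * C0 / 2 ^ n)))).
  { apply RInt_bound_const. lra. apply (ex_RInt_minus (V:=R_NormedModule) gn ginf); apply exRI; auto.
    intros s Hs. eapply Rle_trans. apply HL. apply Rmult_le_compat_l; auto.
    apply nrm_le. intros j. rewrite Rabs_minus_sym. apply (lim5_unif f C0); auto. }
  assert (0 <= 2 * C0 / 2 ^ n) by (apply Rmult_le_pos; [lra| left; apply Rinv_0_lt_compat, pow2_pos]).
  assert (t * (L * (5 * (2 * C0 / 2 ^ n))) <= T * (L * (5 * (2 * C0 / 2 ^ n)))).
  { apply Rmult_le_compat_r. apply Rmult_le_pos; lra. lra. }
  assert (2 * C0 / (2 * 2 ^ n) <= 2 * C0 / 2 ^ n).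
  { unfold Rdiv. apply Rmult_le_compat_l. lra. apply Rinv_le_contravar. apply pow2_pos. pose proof (pow2_pos n); lra. }
  replace ((2 * C0 + 10 * T * L * C0) / 2 ^ n) with (2 * C0 / 2 ^ n + T * (L * (5 * (2 * C0 / 2 ^ n))))
    by (field; apply pow_nonzero; lra).
  lra.
Qed.

Definition rc (g : R -> R) := filterlim g (within nonnegR (locally 0)) (locally (g 0)).

Lemma ballR x e y : ball x e y <-> Rabs (y - x) < e.
Proof. split; intro H; exact H. Qed.

Lemma rc_plus f g : rc f -> rc g -> rc (fun x => f x + g x).
Proof. intros Hf Hg. apply (filterlim_comp_2 f g Rplus Hf Hg). apply (filterlim_plus (K:=R_AbsRing) (f 0) (g 0)). Qed.
Lemma rc_mult f g : rc f -> rc g -> rc (fun x => f x * g x).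
Proof. intros Hf Hg. apply (filterlim_comp_2 f g Rmult Hf Hg). apply (filterlim_mult (K:=R_AbsRing) (f 0) (g 0)). Qed.
Lemma rc_cont f : continuous f 0 -> rc f.
Proof. intros Hf P HP. apply Hf in HP. unfold filtermap, within. 
  apply (filter_imp (fun x => P (f x))); auto. Qed.
Lemma rc_opp f : rc f -> rc (fun x => - f x).
Proof. intros Hf. apply (filterlim_comp _ _ _ f Ropp _ _ _ Hf). apply (filterlim_opp (K:=R_AbsRing) (f 0)). Qed.
Lemma rc_minus f g : rc f -> rc g -> rc (fun x => f x - g x).
Proof. intros. apply rc_plus; auto. apply rc_opp; auto. Qed.

Lemma mono (g dg : R -> R) T : (forall t, 0 < t < T -> is_derive g t (dg t)) ->
  (forall t, 0 < t < T -> dg t <= 0) -> rc g -> forall t, 0 <= t < T -> g t <= g 0.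
Proof.
  intros Hd Hneg Hrc t Ht.
  destruct (Req_dec t 0) as [->|Ht0]; [lra|].
  assert (Hle : forall e, 0 < e <= t -> g t <= g e).
  { intros e He. destruct (Req_dec e t) as [->|Hne]; [lra|].
    destruct (MVT_gen g e t dg) as [c [Hc Heq]].
    - intros x Hx. rewrite Rmin_left, Rmax_right in Hx by lra. apply Hd; lra.
    - intros x Hx. rewrite Rmin_left, Rmax_right in Hx by lra. apply continuity_pt_filterlim.
      apply (ex_derive_continuous (K:=R_AbsRing) (V:=R_NormedModule)). exists (dg x). apply Hd; lra.
    - rewrite Rmin_left, Rmax_right in Hc by lra.
      assert (dg c <= 0) by (apply Hneg; lra). nra. }
  destruct (Rle_or_lt (g t) (g 0)) as [H|H]; auto. exfalso.
  destruct (proj1 (filterlim_locally _ _) Hrc (mkposreal (g t - g 0) ltac:(lra))) as [d Hdd].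
  set (s := Rmin (d / 2) t).
  assert (Hs : 0 < s <= t) by (unfold s; split; [apply Rmin_glb_lt; pose proof (cond_pos d); lra | apply Rmin_r]).
  assert (Hb : ball 0 d s).
  { apply ballR. rewrite Rminus_0_r, Rabs_pos_eq by lra. pose proof (cond_pos d).
    unfold s; eapply Rle_lt_trans. apply Rmin_l. lra. }
  specialize (Hdd s Hb ltac:(unfold nonnegR; lra)). apply ballR in Hdd. simpl in Hdd.
  pose proof (proj1 (ballR _ _ _) Hdd) as Hd2. apply Rabs_lt_between in Hd2. specialize (Hle s Hs). lra.
Qed.

Lemma isd_plus (f g : R -> R) (x df dg : R) : is_derive f x df -> is_derive g x dg ->
  is_derive (fun s => f s + g s) x (df + dg).
Proof. intros. apply (is_derive_plus f g); auto. Qed.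
Lemma isd_minus (f g : R -> R) (x df dg : R) : is_derive f x df -> is_derive g x dg ->
  is_derive (fun s => f s - g s) x (df - dg).
Proof. intros. apply (is_derive_minus f g); auto. Qed.
Lemma isd_mult (f g : R -> R) (x df dg : R) : is_derive f x df -> is_derive g x dg ->
  is_derive (fun s => f s * g s) x (df * g x + f x * dg).
Proof. intros. apply (is_derive_mult f g); auto. intros; apply Rmult_comm. Qed.
Lemma isd_const (c x : R) : is_derive (fun _ => c) x 0.
Proof. apply (is_derive_const (K:=R_AbsRing) c). Qed.
Lemma isd_explin (a x : R) : is_derive (fun s => exp (a * s)) x (a * exp (a * x)).
Proof. auto_derive; auto. ring. Qed.
Lemma isd_ext (f : R -> R) (x l l' : R) : is_derive f x l -> l = l' -> is_derive f x l'.
Proof. intros H ->; auto. Qed.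

Lemma isd_Q (f0 f1 f2 f3 f4 : R -> R) (x d0 d1 d2 d3 d4 : R) :
  is_derive f0 x d0 -> is_derive f1 x d1 -> is_derive f2 x d2 -> is_derive f3 x d3 -> is_derive f4 x d4 ->
  is_derive (fun s => f0 s * f0 s + f1 s * f1 s + f2 s * f2 s + f3 s * f3 s + f4 s * f4 s) x
   (2 * (f0 x * d0 + f1 x * d1 + f2 x * d2 + f3 x * d3 + f4 x * d4)).
Proof.
  intros H0 H1 H2 H3 H4.
  eapply isd_ext.
  apply isd_plus. apply isd_plus. apply isd_plus. apply isd_plus.
  apply isd_mult; eauto. apply isd_mult; eauto. apply isd_mult; eauto. apply isd_mult; eauto. apply isd_mult; eauto.
  ring.
Qed.

Lemma cs5 a b c d e : (a+b+c+d+e)^2 <= 5*(a^2+b^2+c^2+d^2+e^2).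
Proof.
  pose proof (pow2_ge_0 (a-b)); pose proof (pow2_ge_0 (a-c)); pose proof (pow2_ge_0 (a-d));
  pose proof (pow2_ge_0 (a-e)); pose proof (pow2_ge_0 (b-c)); pose proof (pow2_ge_0 (b-d));
  pose proof (pow2_ge_0 (b-e)); pose proof (pow2_ge_0 (c-d)); pose proof (pow2_ge_0 (c-e));
  pose proof (pow2_ge_0 (d-e)). lra.
Qed.

Lemma uniq G L T (y z : R -> Ystate) : 0 <= L -> Lip G L -> y 0 = z 0 ->
  (forall i t, 0 < t < T -> is_derive (fun s => pr i (y s)) t (pr i (G t (y t)))) ->
  (forall i t, 0 < t < T -> is_derive (fun s => pr i (z s)) t (pr i (G t (z t)))) ->
  (forall i, rc (fun s => pr i (y s))) -> (forall i, rc (fun s => pr i (z s))) ->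
  forall t, 0 <= t < T -> y t = z t.
Proof.
  intros HL0 HL H0 Hy Hz Hry Hrz t Ht.
  set (d := fun i s => pr i (y s) - pr i (z s)).
  set (Q := fun s => d 0%nat s * d 0%nat s + d 1%nat s * d 1%nat s + d 2%nat s * d 2%nat s
     + d 3%nat s * d 3%nat s + d 4%nat s * d 4%nat s).
  set (K := 10 * L).
  set (D := fun s => exp (- K * s) * Q s).
  set (e := fun i s => pr i (G s (y s)) - pr i (G s (z s))).
  assert (Hd : forall i s, 0 < s < T -> is_derive (d i) s (e i s)).
  { intros i s Hs. unfold d, e. apply isd_minus; auto. }
  assert (HdQ : forall s, 0 < s < T -> is_derive Q s
     (2 * (d 0%nat s * e 0%nat s + d 1%nat s * e 1%nat s + d 2%nat s * e 2%nat s
         + d 3%nat s * e 3%nat s + d 4%nat s * e 4%nat s))).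
  { intros s Hs. unfold Q. apply isd_Q; apply Hd; auto. }
  assert (HdD : forall s, 0 < s < T -> is_derive D s
     (exp (- K * s) * (- K * Q s + 2 * (d 0%nat s * e 0%nat s + d 1%nat s * e 1%nat s + d 2%nat s * e 2%nat s
         + d 3%nat s * e 3%nat s + d 4%nat s * e 4%nat s)))).
  { intros s Hs. unfold D. eapply isd_ext. apply isd_mult. apply isd_explin. apply HdQ; auto. cbv beta; ring. }
  assert (Hneg : forall s, 0 < s < T ->
     exp (- K * s) * (- K * Q s + 2 * (d 0%nat s * e 0%nat s + d 1%nat s * e 1%nat s + d 2%nat s * e 2%nat s
         + d 3%nat s * e 3%nat s + d 4%nat s * e 4%nat s)) <= 0).
  { intros s Hs.
    assert (Hn : nrm (y s) (z s) = Rabs (d 0%nat s) + Rabs (d 1%nat s) + Rabs (d 2%nat s) + Rabs (d 3%nat s) + Rabs (d 4%nat s)) by reflexivity.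
    assert (He : forall i, Rabs (e i s) <= L * nrm (y s) (z s)) by (intros; apply HL).
    assert (Hde : forall i, d i s * e i s <= Rabs (d i s) * (L * nrm (y s) (z s))).
    { intros i. eapply Rle_trans. apply Rle_abs. rewrite Rabs_mult. apply Rmult_le_compat_l. apply Rabs_pos. apply He. }
    pose proof (cs5 (Rabs (d 0%nat s)) (Rabs (d 1%nat s)) (Rabs (d 2%nat s)) (Rabs (d 3%nat s)) (Rabs (d 4%nat s))) as Hcs.
    rewrite <- !Rsqr_pow2, <- !Rsqr_abs in Hcs. unfold Rsqr in Hcs.
    rewrite <- Hn in Hcs.
    pose proof (Hde 0%nat); pose proof (Hde 1%nat); pose proof (Hde 2%nat); pose proof (Hde 3%nat); pose proof (Hde 4%nat).
    assert (Hsum : d 0%nat s * e 0%nat s + d 1%nat s * e 1%nat s + d 2%nat s * e 2%nat s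
         + d 3%nat s * e 3%nat s + d 4%nat s * e 4%nat s <= L * (nrm (y s) (z s) * nrm (y s) (z s))).
    { apply Rle_trans with ((Rabs (d 0%nat s) + Rabs (d 1%nat s) + Rabs (d 2%nat s) + Rabs (d 3%nat s) + Rabs (d 4%nat s)) * (L * nrm (y s) (z s))).
      lra. rewrite <- Hn. right; ring. }
    assert (L * (nrm (y s) (z s) * nrm (y s) (z s)) <= L * (5 * Q s)).
    { apply Rmult_le_compat_l; auto; unfold Q; simpl in Hcs; lra. }
    assert (0 < exp (- K * s)) by apply exp_pos.
    assert (HX : - K * Q s + 2 * (d 0%nat s * e 0%nat s + d 1%nat s * e 1%nat s + d 2%nat s * e 2%nat s
         + d 3%nat s * e 3%nat s + d 4%nat s * e 4%nat s) <= 0) by (unfold K; lra).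
    rewrite <- (Rmult_0_r (exp (- K * s))). apply Rmult_le_compat_l; lra. }
  assert (HrD : rc D).
  { unfold D. apply rc_mult. apply rc_cont.
    apply (ex_derive_continuous (K:=R_AbsRing) (V:=R_NormedModule)). eexists; apply isd_explin.
    unfold Q, d. repeat apply rc_plus; apply rc_mult; apply rc_minus; auto. }
  pose proof (mono D _ T HdD Hneg HrD t Ht) as Hm.
  assert (HD0 : D 0 = 0) by (unfold D, Q, d; rewrite H0; ring).
  assert (HQ : Q t <= 0).
  { rewrite HD0 in Hm. unfold D in Hm. pose proof (exp_pos (- K * t)).
    destruct (Rle_or_lt (Q t) 0); auto. pose proof (Rmult_lt_0_compat _ _ H H1). lra. }
  apply Yext. intros i.
  assert (Hdi : forall j, d j t = 0).
  { unfold Q in HQ. pose proof (Rle_0_sqr (d 0%nat t)); pose proof (Rle_0_sqr (d 1%nat t));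
    pose proof (Rle_0_sqr (d 2%nat t)); pose proof (Rle_0_sqr (d 3%nat t)); pose proof (Rle_0_sqr (d 4%nat t)).
    unfold Rsqr in *.
    assert (Hsq0 : forall x : R, x * x = 0 -> x = 0) by (intros x Hx; destruct (Rmult_integral _ _ Hx); auto).
    intros j; destruct j as [|[|[|[|[|j]]]]]; [ | | | | | change (d (S (S (S (S (S j))))) t) with (d 4%nat t)];
    apply Hsq0; lra. }
  specialize (Hdi i). unfold d in Hdi. lra.
Qed.

Definition Fexp (Om sig c hb p w1 w2 : R) (Ap : R -> R) (Y : Ystate) (t : R) : Ystate :=
  let q := (w2 - w1) * p in
  let al := q / c * (pr 0 Y + Ap t) / hb in
  ((pr 1 Y, - Om^2 * pr 0 Y - sig * pr 1 Y + c * (q * pr 3 Y)),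
   (((w2 - w1) * pr 3 Y - 2 * al * pr 4 Y, - (w2 - w1) * pr 2 Y), 2 * al * pr 2 Y)).

Lemma dhopf_eq x1 y1 x2 y2 v1 z1 v2 z2 :
  dhopf ((x1,y1),(x2,y2)) ((v1,z1),(v2,z2)) =
  (2*(v1*x2 + x1*v2 + z1*y2 + y1*z2), 2*(v1*y2 + x1*z2 - z1*x2 - y1*v2),
   2*(x1*v1 + y1*z1 - x2*v2 - y2*z2)).
Proof.
  unfold dhopf; simpl. f_equal; [f_equal|]; apply is_derive_unique; auto_derive; auto; ring.
Qed.

Lemma dPi_MB Om sig c hb p w1 w2 Ap X t :
  dPi X (MBfield Om sig c hb p w1 w2 Ap X t) = Fexp Om sig c hb p w1 w2 Ap (Pi X) t.
Proof.
  destruct X as [[A B] [[x1 y1] [x2 y2]]].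
  unfold MBfield, dPi, Pi, Fexp. simpl. rewrite dhopf_eq. simpl.
  repeat (apply pair_equal_spec; split); ring.
Qed.

Lemma onS2_pr Y : onS2 (snd Y) <-> pr 2 Y ^ 2 + pr 3 Y ^ 2 + pr 4 Y ^ 2 = 1.
Proof. destruct Y as [[a b] [[u v] w]]; simpl; tauto. Qed.

Lemma hopf_pre Y : onS2 (snd Y) -> exists X : Xstate, onS3 (snd X) /\ Pi X = Y.
Proof.
  destruct Y as [[A B] [[u1 u2] u3]]. simpl. intros H.
  assert (Hu3 : -1 <= u3) by nra.
  destruct (Req_dec u3 (-1)) as [->|Hne].
  - assert (u1 = 0) by nra. assert (u2 = 0) by nra. subst.
    exists ((A,B),((0,0),(1,0))). simpl. split. ring.
    unfold Pi; simpl. repeat (apply pair_equal_spec; split); try reflexivity; ring.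
  - set (r := sqrt ((1 + u3) / 2)).
    assert (Hr2 : r * r = (1 + u3) / 2) by (unfold r; apply sqrt_sqrt; lra).
    assert (Hr : 0 < r) by (unfold r; apply sqrt_lt_R0; lra).
    assert (Hu : u1^2 + u2^2 = (1 - u3) * (1 + u3)) by lra.
    exists ((A,B),((r,0),(u1/(2*r), u2/(2*r)))). simpl. split.
    + transitivity (r * r + (u1^2 + u2^2) / (4 * (r * r))). field; lra.
      rewrite Hr2, Hu. field. lra.
    + unfold Pi; simpl. repeat (apply pair_equal_spec; split); try reflexivity.
      field; lra. field; lra.
      transitivity (r * r - (u1^2 + u2^2) / (4 * (r * r))). field; lra.
      rewrite Hr2, Hu. field. lra.
Qed.

Lemma Fred_eq Om sig c hb p w1 w2 Ap Y t : onS2 (snd Y) ->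
  Fred Om sig c hb p w1 w2 Ap Y t = Fexp Om sig c hb p w1 w2 Ap Y t.
Proof.
  intros H. unfold Fred.
  match goal with |- epsilon ?i ?P = _ => assert (HP : exists W, P W) end.
  { destruct (hopf_pre Y H) as [X [HX HXY]]. eexists; exists X; split; [exact HX| split; [exact HXY| reflexivity]]. }
  match goal with |- epsilon ?i ?P = _ => destruct (@epsilon_spec _ i P HP) as [X [_ [HXY HW]]] end.
  rewrite HW, dPi_MB, HXY. reflexivity.
Qed.

Definition clampA (R0 a : R) := Rmax (- R0) (Rmin R0 a).
Definition nmu (Y : Ystate) := Rmax 1 ((Rabs (pr 2 Y) + Rabs (pr 3 Y) + Rabs (pr 4 Y)) / 2).

Definition GN (Om sig c hb p w1 w2 : R) (Ap : R -> R) (R0 N : R) (s : R) (Y : Ystate) : Ystate :=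
  let q := (w2 - w1) * p in
  let al := q / c * (clampA R0 (pr 0 Y) + Ap (cl N s)) / hb in
  ((pr 1 Y, - Om^2 * pr 0 Y - sig * pr 1 Y + c * (q * (pr 3 Y / nmu Y))),
   (((w2 - w1) * pr 3 Y - 2 * al * (pr 4 Y / nmu Y), - (w2 - w1) * pr 2 Y), 2 * al * (pr 2 Y / nmu Y))).

Lemma clampA_lip R0 a b : Rabs (clampA R0 a - clampA R0 b) <= Rabs (a - b).
Proof. unfold clampA, Rmax, Rmin. repeat destruct Rle_dec; unfold Rabs; repeat destruct Rcase_abs; lra. Qed.
Lemma clampA_bd R0 a : 0 <= R0 -> Rabs (clampA R0 a) <= R0.
Proof. intros. unfold clampA, Rmax, Rmin. repeat destruct Rle_dec; unfold Rabs; repeat destruct Rcase_abs; lra. Qed.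
Lemma clampA_id R0 a : Rabs a <= R0 -> clampA R0 a = a.
Proof. intros H. unfold clampA, Rmax, Rmin. unfold Rabs in H; destruct Rcase_abs;
  repeat destruct Rle_dec; lra. Qed.

Lemma nmu_ge1 Y : 1 <= nmu Y.
Proof. apply Rmax_l. Qed.
Lemma nmu_bd Y i : (2 <= i <= 4)%nat -> Rabs (pr i Y) <= 2 * nmu Y.
Proof.
  intros Hi. pose proof (Rmax_r 1 ((Rabs (pr 2 Y) + Rabs (pr 3 Y) + Rabs (pr 4 Y)) / 2)).
  fold (nmu Y) in H.
  pose proof (Rabs_pos (pr 2 Y)); pose proof (Rabs_pos (pr 3 Y)); pose proof (Rabs_pos (pr 4 Y)).
  destruct i as [|[|[|[|[|i]]]]]; try lia; simpl in *; lra.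
Qed.
Lemma pr_le_nrm Y Z i : Rabs (pr i Y - pr i Z) <= nrm Y Z.
Proof.
  unfold nrm. pose proof (Rabs_pos (pr 0 Y - pr 0 Z)); pose proof (Rabs_pos (pr 1 Y - pr 1 Z));
  pose proof (Rabs_pos (pr 2 Y - pr 2 Z)); pose proof (Rabs_pos (pr 3 Y - pr 3 Z));
  pose proof (Rabs_pos (pr 4 Y - pr 4 Z)).
  destruct i as [|[|[|[|[|i]]]]]; simpl pr in *; lra.
Qed.
Lemma nmu_lip Y Z : Rabs (nmu Y - nmu Z) <= nrm Y Z / 2.
Proof.
  unfold nmu.
  assert (Hm : forall a b, Rabs (Rmax 1 a - Rmax 1 b) <= Rabs (a - b)).
  { intros a b. unfold Rmax. repeat destruct Rle_dec; unfold Rabs; repeat destruct Rcase_abs; lra. }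
  eapply Rle_trans. apply Hm.
  pose proof (Rabs_triang_inv (pr 2 Y) (pr 2 Z)); pose proof (Rabs_triang_inv (pr 2 Z) (pr 2 Y));
  pose proof (Rabs_triang_inv (pr 3 Y) (pr 3 Z)); pose proof (Rabs_triang_inv (pr 3 Z) (pr 3 Y));
  pose proof (Rabs_triang_inv (pr 4 Y) (pr 4 Z)); pose proof (Rabs_triang_inv (pr 4 Z) (pr 4 Y)).
  rewrite (Rabs_minus_sym (pr 2 Z)), (Rabs_minus_sym (pr 3 Z)), (Rabs_minus_sym (pr 4 Z)) in *.
  unfold nrm. pose proof (Rabs_pos (pr 0 Y - pr 0 Z)); pose proof (Rabs_pos (pr 1 Y - pr 1 Z)).
  unfold Rabs at 1; destruct Rcase_abs; lra.
Qed.

Lemma div_lip (a b ma mb : R) : 1 <= ma -> 1 <= mb -> Rabs b <= 2 * mb ->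
  Rabs (a / ma - b / mb) <= Rabs (a - b) + 2 * Rabs (ma - mb).
Proof.
  intros Ha Hb Hbb.
  replace (a / ma - b / mb) with ((a - b) / ma + (b / mb) * ((mb - ma) / ma)) by (field; lra).
  eapply Rle_trans. apply Rabs_triang. rewrite Rabs_mult.
  unfold Rdiv. rewrite !Rabs_mult, !Rabs_inv, (Rabs_pos_eq ma), (Rabs_pos_eq mb) by lra.
  assert (/ ma <= 1) by (rewrite <- Rinv_1; apply Rinv_le_contravar; lra).
  assert (0 < / ma) by (apply Rinv_0_lt_compat; lra).
  assert (Rabs b * / mb <= 2) by (apply (Rmult_le_reg_r mb); [lra|]; rewrite Rmult_assoc, Rinv_l by lra; lra).
  rewrite (Rabs_minus_sym mb).
  pose proof (Rabs_pos (a - b)); pose proof (Rabs_pos (ma - mb)); pose proof (Rabs_pos b).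
  assert (Rabs (a - b) * / ma <= Rabs (a - b)) by nra.
  assert (Rabs (ma - mb) * / ma <= Rabs (ma - mb)) by nra.
  assert (0 <= Rabs b * / mb) by (apply Rmult_le_pos; auto; left; apply Rinv_0_lt_compat; lra).
  nra.
Qed.

Lemma ut_lip Y Z i : (2 <= i <= 4)%nat -> Rabs (pr i Y / nmu Y - pr i Z / nmu Z) <= 2 * nrm Y Z.
Proof.
  intros Hi. eapply Rle_trans. apply div_lip; try apply nmu_ge1. apply nmu_bd; auto.
  pose proof (pr_le_nrm Y Z i). pose proof (nmu_lip Y Z). lra.
Qed.
Lemma ut_bd Y i : (2 <= i <= 4)%nat -> Rabs (pr i Y / nmu Y) <= 2.
Proof.
  intros Hi. pose proof (nmu_bd Y i Hi). pose proof (nmu_ge1 Y).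
  unfold Rdiv. rewrite Rabs_mult, Rabs_inv, (Rabs_pos_eq (nmu Y)) by lra.
  apply (Rmult_le_reg_r (nmu Y)); [lra|]. rewrite Rmult_assoc, Rinv_l by lra. lra.
Qed.

Lemma prod_lip a b x y : Rabs (a * x - b * y) <= Rabs (a - b) * Rabs x + Rabs b * Rabs (x - y).
Proof.
  replace (a * x - b * y) with ((a - b) * x + b * (x - y)) by ring.
  eapply Rle_trans. apply Rabs_triang. rewrite !Rabs_mult. lra.
Qed.

Definition kq (c hb p w1 w2 : R) := (w2 - w1) * p / c / hb.
Definition alN (c hb p w1 w2 : R) (Ap : R -> R) (R0 N s : R) (Y : Ystate) :=
  kq c hb p w1 w2 * (clampA R0 (pr 0 Y) + Ap (cl N s)).


Lemma GN0 Om sig c hb p w1 w2 Ap R0 N s Y : pr 0 (GN Om sig c hb p w1 w2 Ap R0 N s Y) = pr 1 Y.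
Proof. reflexivity. Qed.
Lemma GN1 Om sig c hb p w1 w2 Ap R0 N s Y : pr 1 (GN Om sig c hb p w1 w2 Ap R0 N s Y) =
  - Om^2 * pr 0 Y - sig * pr 1 Y + c * ((w2 - w1) * p) * (pr 3 Y / nmu Y).
Proof. unfold GN. cbn [pr fst snd]. ring. Qed.
Lemma GN2 Om sig c hb p w1 w2 Ap R0 N s Y : pr 2 (GN Om sig c hb p w1 w2 Ap R0 N s Y) =
  (w2 - w1) * pr 3 Y - 2 * (alN c hb p w1 w2 Ap R0 N s Y * (pr 4 Y / nmu Y)).
Proof. unfold GN, alN, kq. cbn [pr fst snd]. unfold Rdiv; ring. Qed.
Lemma GN3 Om sig c hb p w1 w2 Ap R0 N s Y : pr 3 (GN Om sig c hb p w1 w2 Ap R0 N s Y) =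
  - (w2 - w1) * pr 2 Y.
Proof. reflexivity. Qed.
Lemma GN4 Om sig c hb p w1 w2 Ap R0 N s Y i : (4 <= i)%nat -> pr i (GN Om sig c hb p w1 w2 Ap R0 N s Y) =
  2 * (alN c hb p w1 w2 Ap R0 N s Y * (pr 2 Y / nmu Y)).
Proof. intros Hi. destruct i as [|[|[|[|i]]]]; try lia. unfold GN, alN, kq. cbn [pr fst snd]. unfold Rdiv; ring. Qed.

Lemma prod_term c hb p w1 w2 Ap R0 N Pb s Y Z i : 0 <= R0 -> (forall s, Rabs (Ap (cl N s)) <= Pb) ->
  (2 <= i <= 4)%nat ->
  Rabs (alN c hb p w1 w2 Ap R0 N s Y * (pr i Y / nmu Y) - alN c hb p w1 w2 Ap R0 N s Z * (pr i Z / nmu Z))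
  <= (2 * Rabs (kq c hb p w1 w2) + 2 * (Rabs (kq c hb p w1 w2) * (R0 + Pb))) * nrm Y Z.
Proof.
  intros HR HP Hi. eapply Rle_trans. apply prod_lip.
  set (k := kq c hb p w1 w2).
  assert (H1 : Rabs (alN c hb p w1 w2 Ap R0 N s Y - alN c hb p w1 w2 Ap R0 N s Z) <= Rabs k * nrm Y Z).
  { unfold alN. fold k. replace (k * (clampA R0 (pr 0 Y) + Ap (cl N s)) - k * (clampA R0 (pr 0 Z) + Ap (cl N s)))
      with (k * (clampA R0 (pr 0 Y) - clampA R0 (pr 0 Z))) by ring.
    rewrite Rabs_mult. apply Rmult_le_compat_l. apply Rabs_pos.
    eapply Rle_trans. apply clampA_lip. apply pr_le_nrm. }
  assert (H2 : Rabs (alN c hb p w1 w2 Ap R0 N s Z) <= Rabs k * (R0 + Pb)).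
  { unfold alN. fold k. rewrite Rabs_mult. apply Rmult_le_compat_l. apply Rabs_pos.
    eapply Rle_trans. apply Rabs_triang. pose proof (clampA_bd R0 (pr 0 Z) HR). pose proof (HP s). lra. }
  pose proof (ut_bd Y i Hi). pose proof (ut_lip Y Z i Hi).
  pose proof (nrm_ge0 Y Z). pose proof (Rabs_pos k).
  pose proof (Rabs_pos (alN c hb p w1 w2 Ap R0 N s Y - alN c hb p w1 w2 Ap R0 N s Z)).
  pose proof (Rabs_pos (alN c hb p w1 w2 Ap R0 N s Z)).
  pose proof (Rabs_pos (pr i Y / nmu Y)).
  assert (Rabs (alN c hb p w1 w2 Ap R0 N s Y - alN c hb p w1 w2 Ap R0 N s Z) * Rabs (pr i Y / nmu Y)
     <= Rabs k * nrm Y Z * 2) by (apply Rmult_le_compat; auto).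
  assert (Rabs (alN c hb p w1 w2 Ap R0 N s Z) * Rabs (pr i Y / nmu Y - pr i Z / nmu Z)
     <= Rabs k * (R0 + Pb) * (2 * nrm Y Z)) by (apply Rmult_le_compat; try apply Rabs_pos; auto).
  lra.
Qed.

Lemma lin3 k1 k2 k3 d1 d2 d3 : Rabs (k1 * d1 + k2 * d2 + k3 * d3) <= Rabs k1 * Rabs d1 + Rabs k2 * Rabs d2 + Rabs k3 * Rabs d3.
Proof.
  eapply Rle_trans. apply Rabs_triang. rewrite Rabs_mult.
  eapply Rle_trans. apply Rplus_le_compat_r. eapply Rle_trans. apply Rabs_triang. rewrite !Rabs_mult. apply Rle_refl.
  lra.
Qed.

Definition LN (Om sig c hb p w1 w2 R0 Pb : R) :=
  1 + Om^2 + Rabs sig + 2 * Rabs (c * ((w2 - w1) * p)) + Rabs (w2 - w1)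
  + 4 * Rabs (kq c hb p w1 w2) + 4 * (Rabs (kq c hb p w1 w2) * (R0 + Pb)).

Lemma GN_lip Om sig c hb p w1 w2 Ap R0 N Pb : 0 <= R0 -> (forall s, Rabs (Ap (cl N s)) <= Pb) ->
  Lip (GN Om sig c hb p w1 w2 Ap R0 N) (LN Om sig c hb p w1 w2 R0 Pb).
Proof.
  intros HR HP s Y Z i.
  assert (HPb : 0 <= Pb) by (pose proof (HP 0); pose proof (Rabs_pos (Ap (cl N 0))); lra).
  pose proof (nrm_ge0 Y Z) as Hn.
  set (k := kq c hb p w1 w2).
  assert (Hk : 0 <= Rabs k) by apply Rabs_pos.
  assert (HA : 0 <= Rabs k * (R0 + Pb)) by (apply Rmult_le_pos; lra).
  pose proof (Rabs_pos sig). pose proof (Rabs_pos (c * ((w2 - w1) * p))). pose proof (Rabs_pos (w2 - w1)).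
  assert (HOm : 0 <= Om ^ 2) by (apply pow2_ge_0).
  unfold LN. fold k.
  set (M := 1 + Om ^ 2 + Rabs sig + 2 * Rabs (c * ((w2 - w1) * p)) + Rabs (w2 - w1) + 4 * Rabs k + 4 * (Rabs k * (R0 + Pb))).
  assert (HC : forall C, 0 <= C -> C <= M -> C * nrm Y Z <= M * nrm Y Z) by (intros; apply Rmult_le_compat_r; auto).
  destruct i as [|[|[|[|i]]]].
  - rewrite !GN0. eapply Rle_trans. apply pr_le_nrm. rewrite <- (Rmult_1_l (nrm Y Z)) at 1. apply HC; unfold M; lra.
  - rewrite !GN1.
    replace (- Om ^ 2 * pr 0 Y - sig * pr 1 Y + c * ((w2 - w1) * p) * (pr 3 Y / nmu Y) -
      (- Om ^ 2 * pr 0 Z - sig * pr 1 Z + c * ((w2 - w1) * p) * (pr 3 Z / nmu Z))) with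
      ((- Om ^ 2) * (pr 0 Y - pr 0 Z) + (- sig) * (pr 1 Y - pr 1 Z) + (c * ((w2 - w1) * p)) * (pr 3 Y / nmu Y - pr 3 Z / nmu Z)) by ring.
    eapply Rle_trans. apply lin3. rewrite !Rabs_Ropp, (Rabs_pos_eq (Om ^ 2)) by auto.
    pose proof (pr_le_nrm Y Z 0). pose proof (pr_le_nrm Y Z 1). pose proof (ut_lip Y Z 3 ltac:(lia)).
    assert (Om ^ 2 * Rabs (pr 0 Y - pr 0 Z) <= Om ^ 2 * nrm Y Z) by (apply Rmult_le_compat_l; auto).
    assert (Rabs sig * Rabs (pr 1 Y - pr 1 Z) <= Rabs sig * nrm Y Z) by (apply Rmult_le_compat_l; auto).
    assert (Rabs (c * ((w2 - w1) * p)) * Rabs (pr 3 Y / nmu Y - pr 3 Z / nmu Z) <= Rabs (c * ((w2 - w1) * p)) * (2 * nrm Y Z)) by (apply Rmult_le_compat_l; auto).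
    assert ((Om ^ 2 + Rabs sig + 2 * Rabs (c * ((w2 - w1) * p))) * nrm Y Z <= M * nrm Y Z) by (apply HC; unfold M; lra).
    lra.
  - rewrite !GN2.
    replace ((w2 - w1) * pr 3 Y - 2 * (alN c hb p w1 w2 Ap R0 N s Y * (pr 4 Y / nmu Y)) -
      ((w2 - w1) * pr 3 Z - 2 * (alN c hb p w1 w2 Ap R0 N s Z * (pr 4 Z / nmu Z)))) with
      ((w2 - w1) * (pr 3 Y - pr 3 Z) + (-2) * (alN c hb p w1 w2 Ap R0 N s Y * (pr 4 Y / nmu Y) - alN c hb p w1 w2 Ap R0 N s Z * (pr 4 Z / nmu Z)) + 0 * 0) by ring.
    eapply Rle_trans. apply lin3.
    pose proof (pr_le_nrm Y Z 3). pose proof (prod_term c hb p w1 w2 Ap R0 N Pb s Y Z 4 HR HP ltac:(lia)).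
    fold k in H3.
    assert (Rabs (w2 - w1) * Rabs (pr 3 Y - pr 3 Z) <= Rabs (w2 - w1) * nrm Y Z) by (apply Rmult_le_compat_l; auto).
    assert ((Rabs (w2 - w1) + 2 * (2 * Rabs k + 2 * (Rabs k * (R0 + Pb)))) * nrm Y Z <= M * nrm Y Z) by (apply HC; unfold M; lra).
    replace (Rabs (-2)) with 2 by (unfold Rabs; destruct Rcase_abs; lra). rewrite Rabs_R0.
    lra.
  - rewrite !GN3.
    replace (- (w2 - w1) * pr 2 Y - - (w2 - w1) * pr 2 Z) with (- (w2 - w1) * (pr 2 Y - pr 2 Z)) by ring.
    rewrite Rabs_mult, Rabs_Ropp. pose proof (pr_le_nrm Y Z 2).
    assert (Rabs (w2 - w1) * Rabs (pr 2 Y - pr 2 Z) <= Rabs (w2 - w1) * nrm Y Z) by (apply Rmult_le_compat_l; auto).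
    assert (Rabs (w2 - w1) * nrm Y Z <= M * nrm Y Z) by (apply HC; unfold M; lra).
    lra.
  - rewrite !GN4 by lia.
    replace (2 * (alN c hb p w1 w2 Ap R0 N s Y * (pr 2 Y / nmu Y)) - 2 * (alN c hb p w1 w2 Ap R0 N s Z * (pr 2 Z / nmu Z)))
      with (2 * (alN c hb p w1 w2 Ap R0 N s Y * (pr 2 Y / nmu Y) - alN c hb p w1 w2 Ap R0 N s Z * (pr 2 Z / nmu Z))) by ring.
    rewrite Rabs_mult, (Rabs_pos_eq 2) by lra.
    pose proof (prod_term c hb p w1 w2 Ap R0 N Pb s Y Z 2 HR HP ltac:(lia)). fold k in H2.
    assert (2 * (2 * Rabs k + 2 * (Rabs k * (R0 + Pb))) * nrm Y Z <= M * nrm Y Z) by (apply HC; unfold M; lra).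
    lra.
Qed.

Lemma Apc_cont (Ap : R -> R) N : continuous_on nonnegR Ap -> 0 <= N ->
  forall s, continuous (fun s => Ap (cl N s)) s.
Proof.
  intros HAp HN s P HP.
  assert (H0 : nonnegR (cl N s)) by (apply cl_rng; auto).
  specialize (HAp (cl N s) H0 P HP).
  unfold filtermap, within in HAp.
  pose proof (cl_cont N s _ HAp) as H1. unfold filtermap in H1.
  unfold filtermap. revert H1. apply filter_imp. intros x Hx. apply Hx. apply cl_rng; auto.
Qed.

Lemma Apc_bd (Ap : R -> R) N : continuous_on nonnegR Ap -> 0 <= N ->
  exists Pb, forall s, Rabs (Ap (cl N s)) <= Pb.
Proof.
  intros HAp HN.
  destruct (continuity_ab_maj (fun s => Rabs (Ap (cl N s))) 0 N HN) as [Mx [HM _]].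
  { intros c0 _. apply continuity_pt_filterlim. change (continuous (fun s => Rabs (Ap (cl N s))) c0). apply continuous_Rabs_comp. apply Apc_cont; auto. }
  exists (Rabs (Ap (cl N Mx))). intros s.
  pose proof (cl_rng N s HN). specialize (HM (cl N s) H). simpl in HM.
  rewrite (cl_id N (cl N s)) in HM by auto. exact HM.
Qed.

Lemma GN_cont Om sig c hb p w1 w2 Ap R0 N : continuous_on nonnegR Ap -> 0 <= N ->
  ContT (GN Om sig c hb p w1 w2 Ap R0 N).
Proof.
  intros HAp HN Y i s.
  destruct i as [|[|[|[|i]]]].
  - apply continuous_ext with (f := fun _ => pr 1 Y). intros; reflexivity. apply continuous_const.
  - apply continuous_ext with (f := fun _ => - Om^2 * pr 0 Y - sig * pr 1 Y + c * ((w2 - w1) * p) * (pr 3 Y / nmu Y)).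
    intros; symmetry; apply GN1. apply continuous_const.
  - apply continuous_ext with (f := fun s => (w2 - w1) * pr 3 Y - 2 * ((kq c hb p w1 w2 * (clampA R0 (pr 0 Y) + Ap (cl N s))) * (pr 4 Y / nmu Y))).
    intros; symmetry; rewrite GN2; reflexivity.
    apply cont_minus. apply continuous_const. apply cont_mult. apply continuous_const.
    apply cont_mult; [|apply continuous_const]. apply cont_mult. apply continuous_const.
    apply cont_plus. apply continuous_const. apply Apc_cont; auto.
  - apply continuous_ext with (f := fun _ => - (w2 - w1) * pr 2 Y). intros; reflexivity. apply continuous_const.
  - apply continuous_ext with (f := fun s => 2 * ((kq c hb p w1 w2 * (clampA R0 (pr 0 Y) + Ap (cl N s))) * (pr 2 Y / nmu Y))).
    intros; symmetry; rewrite GN4 by lia; reflexivity.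
    apply cont_mult. apply continuous_const.
    apply cont_mult; [|apply continuous_const]. apply cont_mult. apply continuous_const.
    apply cont_plus. apply continuous_const. apply Apc_cont; auto.
Qed.

Lemma rc_const (k : R) : rc (fun _ => k).
Proof. apply rc_cont. apply continuous_const. Qed.
Lemma rc_exp (a : R) : rc (fun s => exp (a * s)).
Proof. apply rc_cont. apply (ex_derive_continuous (K:=R_AbsRing) (V:=R_NormedModule)). eexists; apply isd_explin. Qed.

Lemma energy (Om sig cq : R) (Z : R -> Ystate) (w : R -> R) T : 0 < sig ->
  (forall t, 0 < t < T -> is_derive (fun s => pr 0 (Z s)) t (pr 1 (Z t))) ->
  (forall t, 0 < t < T -> is_derive (fun s => pr 1 (Z s)) t (- Om^2 * pr 0 (Z t) - sig * pr 1 (Z t) + cq * w t)) ->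
  (forall t, 0 < t < T -> Rabs (w t) <= 2) ->
  rc (fun s => pr 0 (Z s)) -> rc (fun s => pr 1 (Z s)) ->
  forall t, 0 <= t < T -> Om^2 * (pr 0 (Z t) * pr 0 (Z t)) <=
    (pr 1 (Z 0) * pr 1 (Z 0) + Om^2 * (pr 0 (Z 0) * pr 0 (Z 0)) + 4 * (cq * cq)) * exp t.
Proof.
  intros Hsig Ha Hb Hw Hra Hrb t Ht.
  set (a := fun s => pr 0 (Z s)). set (b := fun s => pr 1 (Z s)).
  set (K := 4 * (cq * cq)).
  set (h := fun s => exp (-1 * s) * (b s * b s + Om^2 * (a s * a s) + K)).
  assert (Hd : forall s, 0 < s < T -> is_derive h s
     (exp (-1 * s) * (- (b s * b s + Om^2 * (a s * a s) + K) + 2 * b s * (- sig * b s + cq * w s)))).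
  { intros s Hs. unfold h. eapply isd_ext.
    apply isd_mult. apply isd_explin.
    apply isd_plus. apply isd_plus. apply isd_mult; apply Hb; auto.
    apply isd_mult. apply isd_const. apply isd_mult; apply Ha; auto. apply isd_const.
    cbv beta. unfold a, b, K. ring. }
  assert (Hn : forall s, 0 < s < T ->
     exp (-1 * s) * (- (b s * b s + Om^2 * (a s * a s) + K) + 2 * b s * (- sig * b s + cq * w s)) <= 0).
  { intros s Hs. pose proof (exp_pos (-1 * s)). specialize (Hw s Hs).
    assert (Hw2 : w s * w s <= 4).
    { assert (Hww : w s * w s = Rabs (w s) * Rabs (w s)) by (rewrite <- Rabs_mult; symmetry; apply Rabs_pos_eq; apply Rle_0_sqr).
      rewrite Hww. pose proof (Rabs_pos (w s)). nra. }
    assert (0 <= Om^2 * (a s * a s)) by (apply Rmult_le_pos; [apply pow2_ge_0| apply Rle_0_sqr]).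
    assert (0 <= sig * (b s * b s)) by (apply Rmult_le_pos; [lra| apply Rle_0_sqr]).
    assert (0 <= (b s - cq * w s) * (b s - cq * w s)) by apply Rle_0_sqr.
    assert (cq * cq * (w s * w s) <= cq * cq * 4) by (apply Rmult_le_compat_l; [apply Rle_0_sqr| lra]).
    assert (HX : - (b s * b s + Om^2 * (a s * a s) + K) + 2 * b s * (- sig * b s + cq * w s) <= 0)
      by (unfold K; nra).
    rewrite <- (Rmult_0_r (exp (-1 * s))). apply Rmult_le_compat_l; lra. }
  assert (Hr : rc h).
  { unfold h. apply rc_mult. apply rc_exp. repeat apply rc_plus; try apply rc_mult; auto; try apply rc_const.
    apply rc_mult; auto. }
  pose proof (mono h _ T Hd Hn Hr t Ht) as Hm.
  unfold h in Hm. rewrite Rmult_0_r, exp_0, Rmult_1_l in Hm.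
  fold a b. 
  assert (Hexp : exp (-1 * t) * exp t = 1) by (rewrite <- exp_plus; replace (-1 * t + t) with 0 by ring; apply exp_0).
  assert (0 <= b t * b t) by apply Rle_0_sqr. assert (0 <= K) by (unfold K; pose proof (Rle_0_sqr cq); unfold Rsqr in *; lra).
  assert (Hm2 : (b t * b t + Om ^ 2 * (a t * a t) + K) <= (b 0 * b 0 + Om ^ 2 * (a 0 * a 0) + K) * exp t).
  { apply Rmult_le_compat_r with (r := exp t) in Hm. 2: left; apply exp_pos.
    rewrite Rmult_comm, <- Rmult_assoc, (Rmult_comm (exp t)), Hexp, Rmult_1_l in Hm. exact Hm. }
  change (Om^2 * (a t * a t) <= (b 0 * b 0 + Om^2 * (a 0 * a 0) + K) * exp t). lra.
Qed.

Lemma isd_Q3 (f0 f1 f2 : R -> R) (x d0 d1 d2 : R) :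
  is_derive f0 x d0 -> is_derive f1 x d1 -> is_derive f2 x d2 ->
  is_derive (fun s => f0 s * f0 s + f1 s * f1 s + f2 s * f2 s) x (2 * (f0 x * d0 + f1 x * d1 + f2 x * d2)).
Proof.
  intros H0 H1 H2. eapply isd_ext.
  apply isd_plus. apply isd_plus. apply isd_mult; eauto. apply isd_mult; eauto. apply isd_mult; eauto.
  ring.
Qed.

Lemma sphere Om sig c hb p w1 w2 Ap R0 N (Z : R -> Ystate) T :
  (forall i t, 0 < t < T -> is_derive (fun s => pr i (Z s)) t (pr i (GN Om sig c hb p w1 w2 Ap R0 N t (Z t)))) ->
  (forall i, rc (fun s => pr i (Z s))) ->
  forall t, 0 <= t < T -> pr 2 (Z t) * pr 2 (Z t) + pr 3 (Z t) * pr 3 (Z t) + pr 4 (Z t) * pr 4 (Z t)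
    = pr 2 (Z 0) * pr 2 (Z 0) + pr 3 (Z 0) * pr 3 (Z 0) + pr 4 (Z 0) * pr 4 (Z 0).
Proof.
  intros Hd Hr t Ht.
  set (V := fun s => pr 2 (Z s) * pr 2 (Z s) + pr 3 (Z s) * pr 3 (Z s) + pr 4 (Z s) * pr 4 (Z s)).
  assert (HdV : forall s, 0 < s < T -> is_derive V s 0).
  { intros s Hs. unfold V. eapply isd_ext. apply isd_Q3; apply Hd; auto.
    rewrite GN2, GN3, GN4 by lia. unfold Rdiv. ring. }
  assert (HrV : rc V) by (unfold V; repeat apply rc_plus; apply rc_mult; auto).
  assert (H1 : V t <= V 0) by (apply (mono V (fun _ => 0) T); auto; intros; lra).
  assert (HdV' : forall s, 0 < s < T -> is_derive (fun s => - V s) s 0).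
  { intros s Hs. eapply isd_ext. apply (is_derive_opp (K:=R_AbsRing) V). apply HdV; auto. simpl. unfold opp; simpl; ring. }
  assert (HrV' : rc (fun s => - V s)) by (apply rc_opp; auto).
  assert (H2 : - V t <= - V 0) by (apply (mono (fun s => - V s) (fun _ => 0) T); auto; intros; lra).
  change (V t = V 0). lra.
Qed.

Lemma sum3_le2 a b c : a * a + b * b + c * c = 1 -> Rabs a + Rabs b + Rabs c <= 2.
Proof.
  intros H. pose proof (Rabs_pos a); pose proof (Rabs_pos b); pose proof (Rabs_pos c).
  assert (Ha : Rabs a * Rabs a = a * a) by (rewrite <- Rabs_mult; apply Rabs_pos_eq; apply Rle_0_sqr).
  assert (Hb : Rabs b * Rabs b = b * b) by (rewrite <- Rabs_mult; apply Rabs_pos_eq; apply Rle_0_sqr).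
  assert (Hc : Rabs c * Rabs c = c * c) by (rewrite <- Rabs_mult; apply Rabs_pos_eq; apply Rle_0_sqr).
  pose proof (Rle_0_sqr (Rabs a - Rabs b)); pose proof (Rle_0_sqr (Rabs a - Rabs c));
  pose proof (Rle_0_sqr (Rabs b - Rabs c)). unfold Rsqr in *.
  assert (HS : (Rabs a + Rabs b + Rabs c) * (Rabs a + Rabs b + Rabs c) <= 3) by nra.
  nra.
Qed.

Lemma GN_is_Fexp Om sig c hb p w1 w2 Ap R0 N Y t : Rabs (pr 0 Y) <= R0 -> onS2 (snd Y) -> 0 <= t <= N ->
  GN Om sig c hb p w1 w2 Ap R0 N t Y = Fexp Om sig c hb p w1 w2 Ap Y t.
Proof.
  intros HA HS Ht. apply onS2_pr in HS.
  assert (Hn : nmu Y = 1).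
  { unfold nmu. apply Rmax_left. pose proof (sum3_le2 (pr 2 Y) (pr 3 Y) (pr 4 Y)). 
    assert (Habs : Rabs (pr 2 Y) + Rabs (pr 3 Y) + Rabs (pr 4 Y) <= 2) by (apply H; nra).
    lra. }
  assert (Hc : clampA R0 (pr 0 Y) = pr 0 Y) by (apply clampA_id; auto).
  assert (Hcl : cl N t = t) by (apply cl_id; auto).
  apply Yext; intro i; destruct i as [|[|[|[|i]]]];
    [rewrite GN0|rewrite GN1|rewrite GN2|rewrite GN3|rewrite GN4 by lia]; unfold alN, kq;
    rewrite ?Hn, ?Hc, ?Hcl; unfold Fexp; cbn [pr fst snd]; unfold Rdiv; rewrite ?Rinv_1; ring.
Qed.

Lemma bound_R0 Om K N A t : 0 < Om -> 0 <= K -> Om^2 * (A * A) <= K * exp t -> t <= N ->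
  Rabs A <= 1 + K * exp N / Om^2.
Proof.
  intros HO HK H Ht.
  assert (HO2 : 0 < Om^2) by (apply pow_lt; auto).
  assert (Hx : A * A <= K * exp N / Om^2).
  { apply (Rmult_le_reg_l (Om^2)); auto. unfold Rdiv. 
    replace (Om ^ 2 * (K * exp N * / Om ^ 2)) with (K * exp N) by (field; lra).
    eapply Rle_trans. exact H. apply Rmult_le_compat_l; auto. apply exp_le'; auto. }
  set (X := K * exp N / Om^2) in *.
  assert (0 <= X) by (pose proof (Rle_0_sqr A); unfold Rsqr in *; lra).
  assert (HA : Rabs A * Rabs A = A * A) by (rewrite <- Rabs_mult; apply Rabs_pos_eq; apply Rle_0_sqr).
  pose proof (Rabs_pos A).
  destruct (Rle_or_lt (Rabs A) (1 + X)); auto. nra.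
Qed.

Lemma pr_linear i : is_linear (pr i).
Proof.
  destruct i as [|[|[|[|i]]]].
  - apply (is_linear_comp (fun y : Ystate => fst y) (fun y => fst y)); [apply is_linear_fst|apply is_linear_fst].
  - apply (is_linear_comp (fun y : Ystate => fst y) (fun y => snd y)); [apply is_linear_fst|apply is_linear_snd].
  - apply (is_linear_comp (fun y : Ystate => snd y) (fun y => fst (fst y))). apply is_linear_snd.
    apply (is_linear_comp (fun y : R * R * R => fst y) (fun y => fst y)); [apply is_linear_fst|apply is_linear_fst].
  - apply (is_linear_comp (fun y : Ystate => snd y) (fun y => snd (fst y))). apply is_linear_snd.
    apply (is_linear_comp (fun y : R * R * R => fst y) (fun y => snd y)); [apply is_linear_fst|apply is_linear_snd].
  - change (is_linear (fun y : Ystate => snd (snd y))).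
    apply (is_linear_comp (fun y : Ystate => snd y) (fun y => snd y)); [apply is_linear_snd|apply is_linear_snd].
Qed.

Lemma fd_comp_pr (Z : R -> Ystate) (F : (R -> Prop) -> Prop) {FF : Filter F} W i :
  filterdiff Z F (fun h => scal h W) -> filterdiff (fun s => pr i (Z s)) F (fun h => scal h (pr i W)).
Proof.
  intros H.
  assert (H2 := filterdiff_comp Z (pr i) (fun h => scal h W) (pr i) H (filterdiff_linear (pr i) (pr_linear i))).
  eapply filterdiff_ext_lin. exact H2. intros h. simpl.
  destruct i as [|[|[|[|i]]]]; reflexivity.
Qed.

Lemma fd_pair {U V : NormedModule R_AbsRing} (f : R -> U) (g : R -> V) (F : (R -> Prop) -> Prop) {FF : Filter F} lf lg :
  filterdiff f F lf -> filterdiff g F lg -> filterdiff (fun x => (f x, g x)) F (fun x => (lf x, lg x)).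
Proof.
  intros Hf Hg.
  apply (filterdiff_comp_2 f g (fun a b => (a, b)) lf lg (fun a b => (a, b)) Hf Hg).
  apply filterdiff_ext with (f := fun y => y). intros [a b]; reflexivity.
  eapply filterdiff_ext_lin. apply filterdiff_id. intros [a b]; reflexivity.
Qed.

Lemma fd_of_comp (Phi : R -> Ystate) t W :
  (forall i, is_derive (fun s => pr i (Phi s)) t (pr i W)) -> filterdiff Phi (locally t) (fun h => scal h W).
Proof.
  intros H.
  assert (H1 := fd_pair _ _ (locally t) _ _ (fd_pair _ _ (locally t) _ _ (H 0%nat) (H 1%nat))
      (fd_pair _ _ (locally t) _ _ (fd_pair _ _ (locally t) _ _ (H 2%nat) (H 3%nat)) (H 4%nat))).
  eapply filterdiff_ext_lin. eapply filterdiff_ext. 2: exact H1.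
  intros y; simpl. destruct (Phi y) as [[a b] [[c d] e]]; reflexivity.
  intros h. destruct W as [[a b] [[c d] e]]; reflexivity.
Qed.

Lemma within_proper t : 0 <= t -> ProperFilter' (within nonnegR (locally t)).
Proof.
  intros Ht. constructor.
  - intros H. unfold within in H. apply locally_singleton in H. apply H. exact Ht.
  - apply within_filter. apply locally_filter.
Qed.

Lemma within_lim t x : 0 <= t -> is_filter_lim (within nonnegR (locally t)) x -> x = t.
Proof.
  intros Ht Hx. apply (@is_filter_lim_unique _ _ (within nonnegR (locally t)) (within_proper t Ht)); auto.
  intros P HP. unfold within. revert HP. apply filter_imp. auto.
Qed.

Lemma fd_within (f : R -> Ystate) t l : 0 <= t -> filterdiff f (locally t) l ->
  filterdiff f (within nonnegR (locally t)) l.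
Proof.
  intros Ht [Hl Hd]. split; auto.
  intros x Hx. apply within_lim in Hx; auto. subst x.
  assert (Ht' : is_filter_lim (locally t) t) by (intros P HP; auto).
  specialize (Hd t Ht'). intros eps. specialize (Hd eps).
  unfold within. revert Hd. apply filter_imp. auto.
Qed.

Lemma within_pos t : 0 < t -> within nonnegR (locally t) = locally t.
Proof.
  intros Ht. apply functional_extensionality. intros P. apply propositional_extensionality.
  split.
  - intros H. unfold within in H.
    assert (Hp : locally t (fun x : R => nonnegR x)).
    { exists (mkposreal t Ht). intros y Hy. apply ballR in Hy. simpl in Hy. unfold nonnegR.
      apply Rabs_lt_between in Hy. change (minus y t) with (y - t) in Hy. lra. }
    generalize (filter_and _ _ H Hp). apply filter_imp. intros x [H1 H2]; auto.
  - intros H. unfold within. revert H. apply filter_imp. auto.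
Qed.

Lemma rc_of_fd (Z : R -> Ystate) W : filterdiff Z (within nonnegR (locally 0)) (fun h => scal h W) ->
  forall i, rc (fun s => pr i (Z s)).
Proof.
  intros H i. assert (Hi := fd_comp_pr Z _ W i H).
  unfold rc. apply (@filterdiff_continuous_aux R_AbsRing R_NormedModule R_NormedModule (within nonnegR (locally 0)) _ (fun s => pr i (Z s))).
  exists (fun h => scal h (pr i W)). exact Hi.
  intros P HP. unfold within. revert HP. apply filter_imp. auto.
Qed.

Definition KE (Om c p w1 w2 : R) (Y0 : Ystate) :=
  pr 1 Y0 * pr 1 Y0 + Om^2 * (pr 0 Y0 * pr 0 Y0) + 4 * ((c * ((w2 - w1) * p)) * (c * ((w2 - w1) * p))).
Definition R0N (Om c p w1 w2 : R) (Y0 : Ystate) (N : R) := 1 + KE Om c p w1 w2 Y0 * exp N / Om^2.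

Definition TS (Om sig c hb p w1 w2 : R) (Ap : R -> R) (Y0 : Ystate) (Z : R -> Ystate) (T : R) :=
  Z 0 = Y0 /\ (forall t, 0 <= t < T -> onS2 (snd (Z t))) /\
  (forall i t, 0 < t < T -> is_derive (fun s => pr i (Z s)) t (pr i (Fexp Om sig c hb p w1 w2 Ap (Z t) t))) /\
  (forall i, rc (fun s => pr i (Z s))).

Lemma KE_ge0 Om c p w1 w2 Y0 : 0 <= KE Om c p w1 w2 Y0.
Proof.
  unfold KE. pose proof (Rle_0_sqr (pr 1 Y0)); pose proof (Rle_0_sqr (pr 0 Y0));
  pose proof (Rle_0_sqr (c * ((w2 - w1) * p))); unfold Rsqr in *.
  assert (0 <= Om ^ 2 * (pr 0 Y0 * pr 0 Y0)) by (apply Rmult_le_pos; auto; apply pow2_ge_0). lra.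
Qed.
Lemma R0N_ge0 Om c p w1 w2 Y0 N : 0 < Om -> 0 <= R0N Om c p w1 w2 Y0 N.
Proof.
  intros HO. unfold R0N. pose proof (KE_ge0 Om c p w1 w2 Y0). pose proof (exp_pos N).
  assert (0 < Om^2) by (apply pow_lt; auto).
  assert (0 <= KE Om c p w1 w2 Y0 * exp N / Om ^ 2) by (apply Rmult_le_pos; [apply Rmult_le_pos; lra| left; apply Rinv_0_lt_compat; lra]).
  lra.
Qed.

Lemma abs_le1 a b c0 : a^2 + b^2 + c0^2 = 1 -> Rabs b <= 1.
Proof.
  intros H. assert (b * b <= 1) by nra.
  assert (Hb : Rabs b * Rabs b = b * b) by (rewrite <- Rabs_mult; apply Rabs_pos_eq; apply Rle_0_sqr).
  pose proof (Rabs_pos b). nra.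
Qed.

Lemma TS_bound Om sig c hb p w1 w2 Ap Y0 Z T N : 0 < Om -> 0 < sig ->
  TS Om sig c hb p w1 w2 Ap Y0 Z T -> forall t, 0 <= t < T -> t <= N -> Rabs (pr 0 (Z t)) <= R0N Om c p w1 w2 Y0 N.
Proof.
  intros HO Hs [H0 [HS [Hd Hr]]] t Ht HtN.
  assert (HE := energy Om sig (c * ((w2 - w1) * p)) Z (fun s => pr 3 (Z s)) T Hs).
  assert (HE' : Om^2 * (pr 0 (Z t) * pr 0 (Z t)) <= KE Om c p w1 w2 Y0 * exp t).
  { assert (Ha : forall s, 0 < s < T -> is_derive (fun s => pr 0 (Z s)) s (pr 1 (Z s))).
    { intros s Hs'. apply (Hd 0%nat s Hs'). }
    assert (Hb : forall s, 0 < s < T -> is_derive (fun s => pr 1 (Z s)) s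
      (- Om ^ 2 * pr 0 (Z s) - sig * pr 1 (Z s) + c * ((w2 - w1) * p) * (fun s : R => pr 3 (Z s)) s)).
    { intros s Hs'. eapply isd_ext. apply (Hd 1%nat s Hs'). unfold Fexp; cbn [pr fst snd]. ring. }
    assert (Hw : forall s, 0 < s < T -> Rabs ((fun s : R => pr 3 (Z s)) s) <= 2).
    { intros s Hs'. pose proof (HS s ltac:(lra)) as HS'. apply onS2_pr in HS'.
      pose proof (abs_le1 _ _ _ HS'). cbv beta. lra. }
    unfold KE. rewrite <- H0. apply HE; auto. }
  unfold R0N. apply bound_R0 with (t := t); auto. apply KE_ge0.
Qed.

Lemma TS_GN Om sig c hb p w1 w2 Ap Y0 Z T N : 0 < Om -> 0 < sig -> T <= N ->
  TS Om sig c hb p w1 w2 Ap Y0 Z T -> forall i t, 0 < t < T ->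
  is_derive (fun s => pr i (Z s)) t (pr i (GN Om sig c hb p w1 w2 Ap (R0N Om c p w1 w2 Y0 N) N t (Z t))).
Proof.
  intros HO Hs HTN HTS i t Ht.
  pose proof HTS as [H0 [HS [Hd Hr]]].
  rewrite GN_is_Fexp. apply Hd; auto.
  apply (TS_bound Om sig c hb p w1 w2 Ap Y0 Z T N); auto; lra.
  apply HS; lra. lra.
Qed.

Lemma LN_ge0 Om sig c hb p w1 w2 R0 Pb : 0 <= R0 + Pb -> 0 <= LN Om sig c hb p w1 w2 R0 Pb.
Proof.
  intros H. unfold LN.
  pose proof (Rabs_pos sig). pose proof (Rabs_pos (c * ((w2 - w1) * p))). pose proof (Rabs_pos (w2 - w1)).
  pose proof (Rabs_pos (kq c hb p w1 w2)). pose proof (pow2_ge_0 Om).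
  assert (0 <= Rabs (kq c hb p w1 w2) * (R0 + Pb)) by (apply Rmult_le_pos; auto).
  lra.
Qed.

Lemma uniq_TS Om sig c hb p w1 w2 Ap Y0 Z1 Z2 T : 0 < Om -> 0 < sig -> continuous_on nonnegR Ap ->
  TS Om sig c hb p w1 w2 Ap Y0 Z1 T -> TS Om sig c hb p w1 w2 Ap Y0 Z2 T ->
  forall t, 0 <= t < T -> Z1 t = Z2 t.
Proof.
  intros HO Hs HAp H1 H2 t Ht.
  assert (HT : 0 <= T) by lra.
  destruct (Apc_bd Ap T HAp HT) as [Pb HPb].
  assert (HPb0 : 0 <= Pb) by (pose proof (HPb 0); pose proof (Rabs_pos (Ap (cl T 0))); lra).
  pose proof (R0N_ge0 Om c p w1 w2 Y0 T HO).
  apply (uniq (GN Om sig c hb p w1 w2 Ap (R0N Om c p w1 w2 Y0 T) T) (LN Om sig c hb p w1 w2 (R0N Om c p w1 w2 Y0 T) Pb) T).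
  - apply LN_ge0; lra.
  - apply GN_lip; auto.
  - destruct H1 as [-> _]; destruct H2 as [-> _]; auto.
  - apply (TS_GN Om sig c hb p w1 w2 Ap Y0 Z1 T T); auto; lra.
  - apply (TS_GN Om sig c hb p w1 w2 Ap Y0 Z2 T T); auto; lra.
  - apply H1.
  - apply H2.
  - auto.
Qed.

Definition PhiF (G : R -> Ystate -> Ystate) (y : R -> Ystate) (y0 : Ystate) (s : R) : Ystate :=
  mk5 (fun j => pr j y0 + RInt (fun u => pr j (G u (y u))) 0 s).

Lemma PhiF_pr G y y0 s i : pr i (PhiF G y y0 s) = pr i y0 + RInt (fun u => pr i (G u (y u))) 0 s.
Proof. unfold PhiF. apply (pr_mk5 (fun q => q y0 + RInt (fun u => q (G u (y u))) 0 s)). Qed.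

Lemma PhiF_deriv G L y y0 : 0 <= L -> Lip G L -> ContT G -> Ccont y ->
  forall i t, is_derive (fun s => pr i (PhiF G y y0 s)) t (pr i (G t (y t))).
Proof.
  intros HL0 HL HC Hy i t.
  apply is_derive_ext with (f := fun s => pr i y0 + RInt (fun u => pr i (G u (y u))) 0 s).
  intros; symmetry; apply PhiF_pr.
  eapply isd_ext. apply isd_plus. apply isd_const. apply prim_deriv.
  intros s. apply (contG G L HL0 HL HC y Hy i). simpl. ring.
Qed.

Lemma exist_TS Om sig c hb p w1 w2 Ap Y0 N : 0 < Om -> 0 < sig -> continuous_on nonnegR Ap ->
  onS2 (snd Y0) -> 0 <= N ->
  exists Z, TS Om sig c hb p w1 w2 Ap Y0 Z N /\
    forall t, 0 <= t < N -> exists Phi : R -> Ystate,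
      filterdiff Phi (locally t) (fun h => scal h (Fexp Om sig c hb p w1 w2 Ap (Z t) t)) /\
      forall s, 0 <= s <= N -> Phi s = Z s.
Proof.
  intros HO Hs HAp HY0 HN.
  destruct (Apc_bd Ap N HAp HN) as [Pb HPb].
  assert (HPb0 : 0 <= Pb) by (pose proof (HPb 0); pose proof (Rabs_pos (Ap (cl N 0))); lra).
  pose proof (R0N_ge0 Om c p w1 w2 Y0 N HO) as HR0.
  set (R0 := R0N Om c p w1 w2 Y0 N) in *.
  set (G := GN Om sig c hb p w1 w2 Ap R0 N).
  set (L := LN Om sig c hb p w1 w2 R0 Pb).
  assert (HL0 : 0 <= L) by (apply LN_ge0; lra).
  assert (HL : Lip G L) by (apply GN_lip; auto).
  assert (HC : ContT G) by (apply GN_cont; auto).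
  destruct (picard G L N Y0 HL0 HN HL HC) as [y [Hyc Hyi]].
  assert (HPy : forall s, 0 <= s <= N -> PhiF G y Y0 s = y s).
  { intros s Hs'. apply Yext. intros i. rewrite PhiF_pr. symmetry. apply Hyi; auto. }
  assert (Hy0 : y 0 = Y0).
  { apply Yext. intros i. rewrite Hyi by lra. rewrite RInt_point. simpl. unfold zero; simpl. ring. }
  assert (HdG : forall i t, 0 < t < N -> is_derive (fun s => pr i (y s)) t (pr i (G t (y t)))).
  { intros i t Ht. apply is_derive_ext_loc with (f := fun s => pr i (PhiF G y Y0 s)).
    - assert (Hpos : 0 < Rmin t (N - t)) by (apply Rmin_glb_lt; lra).
      exists (mkposreal _ Hpos). intros s Hb. apply ballR in Hb. simpl in Hb.
      change (minus s t) with (s - t) in Hb.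
      assert (Rabs (s - t) < t) by (eapply Rlt_le_trans; [exact Hb| apply Rmin_l]).
      assert (Rabs (s - t) < N - t) by (eapply Rlt_le_trans; [exact Hb| apply Rmin_r]).
      apply Rabs_lt_between in H. apply Rabs_lt_between in H0.
      rewrite HPy; auto. change R in s. lra.
    - apply (PhiF_deriv G L y Y0 HL0 HL HC Hyc). }
  assert (Hr : forall i, rc (fun s => pr i (y s))) by (intros i; apply rc_cont; apply Hyc).
  assert (HS : forall t, 0 <= t < N -> onS2 (snd (y t))).
  { intros t Ht. apply onS2_pr. pose proof (sphere Om sig c hb p w1 w2 Ap R0 N y N HdG Hr t Ht) as H.
    rewrite Hy0 in H. apply onS2_pr in HY0. nra. }
  assert (HA : forall t, 0 <= t < N -> Rabs (pr 0 (y t)) <= R0).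
  { intros t Ht.
    assert (Ha : forall s, 0 < s < N -> is_derive (fun s => pr 0 (y s)) s (pr 1 (y s))).
    { intros s Hs'. apply (HdG 0%nat s Hs'). }
    assert (Hb : forall s, 0 < s < N -> is_derive (fun s => pr 1 (y s)) s
      (- Om ^ 2 * pr 0 (y s) - sig * pr 1 (y s) + c * ((w2 - w1) * p) * (fun s : R => pr 3 (y s) / nmu (y s)) s)).
    { intros s Hs'. eapply isd_ext. apply (HdG 1%nat s Hs'). unfold G. rewrite GN1. reflexivity. }
    assert (Hw : forall s, 0 < s < N -> Rabs ((fun s : R => pr 3 (y s) / nmu (y s)) s) <= 2).
    { intros s Hs'. cbv beta. apply ut_bd. lia. }
    pose proof (energy Om sig (c * ((w2 - w1) * p)) y (fun s => pr 3 (y s) / nmu (y s)) N Hs Ha Hb Hw (Hr 0%nat) (Hr 1%nat) t Ht) as HE.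
    rewrite Hy0 in HE. fold (KE Om c p w1 w2 Y0) in HE.
    unfold R0, R0N. apply bound_R0 with (t := t); auto. apply KE_ge0. lra. }
  assert (HGF : forall t, 0 <= t < N -> G t (y t) = Fexp Om sig c hb p w1 w2 Ap (y t) t).
  { intros t Ht. unfold G. apply GN_is_Fexp; auto. lra. }
  exists y. split.
  - split; [auto|split; [auto|split; [|auto]]].
    intros i t Ht. rewrite <- HGF by lra. apply HdG; auto.
  - intros t Ht. exists (PhiF G y Y0). split; auto.
    apply fd_of_comp. intros i. rewrite <- HGF by auto. apply (PhiF_deriv G L y Y0 HL0 HL HC Hyc).
Qed.

Definition nn (s : R) : nat := S (Z.abs_nat (up s)).
Lemma nn_gt s : s + 1 <= INR (nn s).
Proof.
  unfold nn. rewrite S_INR. destruct (archimed s) as [H _].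
  rewrite INR_IZR_INZ, Zabs2Nat.id_abs, abs_IZR.
  pose proof (Rle_abs (IZR (up s))). lra.
Qed.

Lemma TS_restr Om sig c hb p w1 w2 Ap Y0 Z T T' : T' <= T ->
  TS Om sig c hb p w1 w2 Ap Y0 Z T -> TS Om sig c hb p w1 w2 Ap Y0 Z T'.
Proof.
  intros HT [H0 [HS [Hd Hr]]]. split; auto. split. intros; apply HS; lra.
  split; auto. intros; apply Hd; lra.
Qed.

Theorem lemma3p1 (Om sig c hb p w1 w2 : R) (Ap : R -> R) :
  0 < Om -> 0 < sig -> 0 < c -> 0 < hb -> 0 < p -> w1 < w2 ->
  continuous_on nonnegR Ap ->
  forall Y0 : Ystate, onS2 (snd Y0) ->
  exists Y : R -> Ystate,
    reduced_solution Om sig c hb p w1 w2 Ap Y0 Y /\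
    (forall Z : R -> Ystate, reduced_solution Om sig c hb p w1 w2 Ap Y0 Z ->
       forall t, 0 <= t -> Z t = Y t).
Proof.
  intros HOm Hsig Hc Hhb Hp Hw HAp Y0 HY0.
  assert (Hex : forall N : nat, exists Z, TS Om sig c hb p w1 w2 Ap Y0 Z (INR N) /\
    forall t, 0 <= t < INR N -> exists Phi : R -> Ystate,
      filterdiff Phi (locally t) (fun h => scal h (Fexp Om sig c hb p w1 w2 Ap (Z t) t)) /\
      forall s, 0 <= s <= INR N -> Phi s = Z s).
  { intros N. apply exist_TS; auto. apply pos_INR. }
  set (ysel := fun N => proj1_sig (constructive_indefinite_description _ (Hex N))).
  assert (Hsel : forall N, TS Om sig c hb p w1 w2 Ap Y0 (ysel N) (INR N) /\
    forall t, 0 <= t < INR N -> exists Phi : R -> Ystate,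
      filterdiff Phi (locally t) (fun h => scal h (Fexp Om sig c hb p w1 w2 Ap (ysel N t) t)) /\
      forall s, 0 <= s <= INR N -> Phi s = ysel N s).
  { intros N. unfold ysel. apply (proj2_sig (constructive_indefinite_description _ (Hex N))). }
  clearbody ysel.
  assert (Hagree : forall N M t, 0 <= t -> t < INR N -> t < INR M -> ysel N t = ysel M t).
  { intros N M t Ht HN HM.
    apply (uniq_TS Om sig c hb p w1 w2 Ap Y0 _ _ (Rmin (INR N) (INR M))); auto.
    apply (TS_restr _ _ _ _ _ _ _ _ _ _ (INR N)). apply Rmin_l. apply Hsel.
    apply (TS_restr _ _ _ _ _ _ _ _ _ _ (INR M)). apply Rmin_r. apply Hsel.
    split; auto. apply Rmin_glb_lt; auto. }
  exists (fun s => ysel (nn s) s).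
  split.
  - split; [|split].
    + apply (proj1 (Hsel (nn 0))).
    + intros t Ht. pose proof (nn_gt t). apply (proj1 (proj2 (proj1 (Hsel (nn t))))). lra.
    + intros t Ht.
      set (N0 := S (nn t)).
      assert (HN0 : t + 2 <= INR N0) by (unfold N0; rewrite S_INR; pose proof (nn_gt t); lra).
      clearbody N0.
      pose proof (nn_gt t) as Hnt.
      assert (HYt : ysel (nn t) t = ysel N0 t) by (apply Hagree; lra).
      assert (HS : onS2 (snd (ysel (nn t) t))) by (apply (proj1 (proj2 (proj1 (Hsel (nn t))))); lra).
      rewrite Fred_eq by auto. rewrite HYt.
      destruct (proj2 (Hsel N0) t ltac:(lra)) as [Phi [HPd HPe]].
      apply (filterdiff_ext_loc (F := within nonnegR (locally t)) Phi).
      * exists (mkposreal 1 Rlt_0_1). intros s Hb Hs0. apply ballR in Hb. simpl in Hb.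
        change (minus s t) with (s - t) in Hb. apply Rabs_lt_between in Hb. unfold nonnegR in Hs0.
        change R in s.
        pose proof (nn_gt s).
        change (minus s t) with (s - t) in Hb. rewrite HPe by lra. apply Hagree; lra.
      * intros x Hx. apply within_lim in Hx; auto. subst x. rewrite HPe by lra. symmetry; exact HYt.
      * apply fd_within; auto.
  - intros Z [HZ0 [HZS HZd]] t Ht.
    assert (HTS : TS Om sig c hb p w1 w2 Ap Y0 Z (INR (nn t))).
    { split; auto. split. intros; apply HZS; lra. split.
      - intros i t' Ht'. specialize (HZd t' ltac:(lra)). rewrite within_pos in HZd by lra.
        rewrite <- Fred_eq by (apply HZS; lra).
        apply (fd_comp_pr Z (locally t') _ i HZd).
      - apply (rc_of_fd Z _ (HZd 0 ltac:(lra))). }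
    pose proof (nn_gt t).
    apply (uniq_TS Om sig c hb p w1 w2 Ap Y0 _ _ (INR (nn t))); auto.
    apply Hsel. lra.
Qed.
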